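(* Let $x_0>0$ and $L>0$. There exist a unique $\lambda>0$ and a unique vertically symmetric admissible curve $\gamma=(x,y)$ on $[0,2L]$, parametrized by arc length, such that $\dot y(0)=\dot y(2L)=0$ and $$2+\frac{d^2(H^{-2})}{ds^2}=\lambda\quad\text{on }[0,2L],$$ if and only if $3x_0<L$. In that case $\lambda=\lambda(x_0,L)=\frac{2L}{L+x_0}$ and $\gamma=(x,y)$ is given, with $\sigma=\pi\sqrt{x_0/(L+x_0)}$, $k=L/\sin\sigma$ and $a(s)=\arcsin((s-L)/k)$, by $x(s)=-\frac k2\Big(\frac{\sigma}{\pi+\sigma}\sin\big(\tfrac{\pi+\sigma}{\sigma}a(s)\big)+\frac{\sigma}{\pi-\sigma}\sin\big(\tfrac{\pi-\sigma}{\sigma}a(s)\big)\Big)$, $y(s)=\frac k2\Big(\frac{\sigma}{\pi+\sigma}\cos\big(\tfrac{\pi+\sigma}{\sigma}a(s)\big)+\frac{\sigma}{\pi-\sigma}\cos\big(\tfrac{\pi-\sigma}{\sigma}a(s)\big)\Big)+\frac{\pi x_0}{\sigma\tan\sigma}$ for $s\in[0,2L]$.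
   Context: Notation: $(\xi,\eta)^\perp=(\eta,-\xi)$; for a regular curve $\gamma\in C^2([0,2L],\mathbb R^2)$, curvature $H=\langle\dot\gamma,\ddot\gamma^\perp\rangle/|\dot\gamma|^3$; strictly counterclockwise means $H>0$. A curve $\gamma=(x,y)$ is admissible if $\gamma\in C^\infty([0,2L],\mathbb R^2)$ is regular, strictly counterclockwise, injective, $\gamma(0)=(x_0,0)$, $\gamma(2L)=(-x_0,0)$, $y>0$ on $(0,2L)$. Vertically symmetric means the support is symmetric with respect to the axis $\{x=0\}$. Parametrized by arc length means $|\dot\gamma|\equiv1$. *)

(* Defs.v *)
From Stdlib Require Import Reals Lra.
From Coquelicot Require Import Coquelicot.
Open Scope R_scope.

(* f is C^infinity on an open neighbourhood (a-e, b+e) of [a,b].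
   (Equivalent to C^infinity([a,b]) by Seeley/Borel extension.) *)
Definition smooth_near (a b : R) (f : R -> R) : Prop :=
  exists e : R, 0 < e /\
    forall (n : nat) (t : R), a - e < t < b + e -> ex_derive_n f n t.

(* curvature H = <gamma', (gamma'')^perp> / |gamma'|^3, with (xi,eta)^perp = (eta,-xi) *)
Definition curvature (x y : R -> R) (s : R) : R :=
  (Derive x s * Derive (Derive y) s - Derive y s * Derive (Derive x) s)
  / (sqrt (Derive x s ^ 2 + Derive y s ^ 2)) ^ 3.

Definition admissible (x0 L : R) (x y : R -> R) : Prop :=
  smooth_near 0 (2 * L) x /\ smooth_near 0 (2 * L) y /\
  (forall s, 0 <= s <= 2 * L -> (Derive x s, Derive y s) <> (0, 0)) /\
  (forall s, 0 <= s <= 2 * L -> 0 < curvature x y s) /\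
  (forall s t, 0 <= s <= 2 * L -> 0 <= t <= 2 * L ->
     x s = x t -> y s = y t -> s = t) /\
  x 0 = x0 /\ y 0 = 0 /\ x (2 * L) = - x0 /\ y (2 * L) = 0 /\
  (forall s, 0 < s < 2 * L -> 0 < y s).

Definition vert_symmetric (L : R) (x y : R -> R) : Prop :=
  forall s, 0 <= s <= 2 * L ->
    exists t, 0 <= t <= 2 * L /\ x t = - x s /\ y t = y s.

Definition arclength_param (L : R) (x y : R -> R) : Prop :=
  forall s, 0 <= s <= 2 * L -> Derive x s ^ 2 + Derive y s ^ 2 = 1.

Definition is_solution (x0 L lam : R) (x y : R -> R) : Prop :=
  0 < lam /\ admissible x0 L x y /\ vert_symmetric L x y /\
  arclength_param L x y /\
  Derive y 0 = 0 /\ Derive y (2 * L) = 0 /\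
  (forall s, 0 <= s <= 2 * L ->
     2 + Derive_n (fun t => / (curvature x y t) ^ 2) 2 s = lam).

Definition sigma_ (x0 L : R) : R := PI * sqrt (x0 / (L + x0)).
Definition k_ (x0 L : R) : R := L / sin (sigma_ x0 L).
Definition a_ (x0 L s : R) : R := asin ((s - L) / k_ x0 L).

Definition sol_x (x0 L s : R) : R :=
  let sg := sigma_ x0 L in let k := k_ x0 L in let a := a_ x0 L s in
  - (k / 2) * (sg / (PI + sg) * sin ((PI + sg) / sg * a)
               + sg / (PI - sg) * sin ((PI - sg) / sg * a)).

Definition sol_y (x0 L s : R) : R :=
  let sg := sigma_ x0 L in let k := k_ x0 L in let a := a_ x0 L s in
  (k / 2) * (sg / (PI + sg) * cos ((PI + sg) / sg * a)
             + sg / (PI - sg) * cos ((PI - sg) / sg * a))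
  + PI * x0 / (sg * tan sg).

(* Main.v *)
Require Import Defs.
From Stdlib Require Import Reals Lra Lia ClassicalEpsilon Classical.
From Coquelicot Require Import Coquelicot.
Open Scope R_scope.

Definition Cn (U : R -> Prop) (n : nat) (f : R -> R) :=
  forall k t, (k <= n)%nat -> U t -> ex_derive_n f k t.

Lemma Derive_n_Derive f n t : Derive_n (Derive f) n t = Derive_n f (S n) t.
Proof.
  revert t; induction n; intros t; [reflexivity|].
  simpl. apply Derive_ext. intros; apply IHn.
Qed.

Lemma deriv_Derive_n U f g : open U -> (forall t, U t -> is_derive f t (g t)) ->
  forall n t, U t -> Derive_n f (S n) t = Derive_n g n t.
Proof.
  intros HU Hd n. induction n; intros t Ht.
  - simpl. apply is_derive_unique, Hd, Ht.
  - simpl. apply Derive_ext_loc.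
    apply (filter_imp U); [|apply HU, Ht]. intros; apply IHn; auto.
Qed.

Lemma Cn_step U n f g : open U -> (forall t, U t -> is_derive f t (g t)) ->
  Cn U n g -> Cn U (S n) f.
Proof.
  intros HU Hd Hg k t Hk Ht. destruct k as [|j]; [exact I|].
  simpl. destruct j as [|i].
  - simpl. eexists; apply Hd, Ht.
  - apply ex_derive_ext_loc with (f := Derive_n g i).
    + apply (filter_imp U); [|apply HU, Ht]. intros u Hu.
      symmetry; apply (deriv_Derive_n U f g HU Hd i u Hu).
    + apply (Hg (S i) t); [lia|auto].
Qed.

Lemma Cn_Derive U n f : Cn U (S n) f -> Cn U n (Derive f).
Proof.
  intros H k t Hk Ht. destruct k as [|j]; [exact I|].
  simpl. apply ex_derive_ext with (f := Derive_n f (S j)).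
  - intros; symmetry; apply Derive_n_Derive.
  - apply (H (S (S j)) t); [lia|auto].
Qed.

Lemma Cn_is_derive U n f t : Cn U (S n) f -> U t -> is_derive f t (Derive f t).
Proof.
  intros H Ht. apply Derive_correct. apply (H 1%nat t); [lia|auto].
Qed.

Lemma Cn_mono U m n f : (m <= n)%nat -> Cn U n f -> Cn U m f.
Proof. intros Hmn H k t Hk Ht. apply H; auto; lia. Qed.

Lemma Cn_0 U f : Cn U 0 f.
Proof. intros k t Hk Ht. destruct k; [exact I| lia]. Qed.

Lemma Cn_ext U n f g : (forall t, f t = g t) -> Cn U n f -> Cn U n g.
Proof. intros E H k t Hk Ht. apply ex_derive_n_ext with f; auto. Qed.

Lemma ID_plus (f g : R -> R) (t a b : R) : is_derive f t a -> is_derive g t b ->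
  is_derive (fun x => f x + g x) t (a + b).
Proof. intros H1 H2; apply is_derive_Reals; apply is_derive_Reals in H1, H2.
  apply (derivable_pt_lim_plus f g); auto. Qed.
Lemma ID_mult (f g : R -> R) (t a b : R) : is_derive f t a -> is_derive g t b ->
  is_derive (fun x => f x * g x) t (a * g t + f t * b).
Proof. intros H1 H2; apply is_derive_Reals; apply is_derive_Reals in H1, H2.
  apply (derivable_pt_lim_mult f g); auto. Qed.
Lemma ID_comp (h u : R -> R) (t a b : R) : is_derive u t a -> is_derive h (u t) b ->
  is_derive (fun x => h (u x)) t (b * a).
Proof. intros H1 H2; apply is_derive_Reals; apply is_derive_Reals in H1, H2.
  apply (derivable_pt_lim_comp u h); auto. Qed.
Lemma ID_ext (f g : R -> R) (t a b : R) : (forall x, f x = g x) -> a = b -> is_derive f t a -> is_derive g t b.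
Proof. intros E1 E2 H; subst; eapply is_derive_ext; eauto. Qed.

Section CnU.
Variable U : R -> Prop.
Hypothesis HU : open U.

Lemma Cn_const n c : Cn U n (fun _ => c).
Proof.
  revert c; induction n; intros c. apply Cn_0.
  apply Cn_step with (g := fun _ => 0); [assumption| |]. intros; auto_derive; [exact I | reflexivity].
  apply IHn.
Qed.

Lemma Cn_plus n f g : Cn U n f -> Cn U n g -> Cn U n (fun t => f t + g t).
Proof.
  revert f g; induction n; intros f g Hf Hg. apply Cn_0.
  apply Cn_step with (g := fun t => Derive f t + Derive g t); [assumption| |].
  - intros t Ht. apply ID_plus; apply (Cn_is_derive U n); assumption.
  - apply IHn; apply Cn_Derive; auto.
Qed.

Lemma Cn_mult n f g : Cn U n f -> Cn U n g -> Cn U n (fun t => f t * g t).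
Proof.
  revert f g; induction n; intros f g Hf Hg. apply Cn_0.
  apply Cn_step with (g := fun t => Derive f t * g t + f t * Derive g t); [assumption| |].
  - intros t Ht. apply ID_mult; apply (Cn_is_derive U n); assumption.
  - apply Cn_plus.
    + apply IHn. apply Cn_Derive; exact Hf. apply (Cn_mono U n (S n)); [lia|exact Hg].
    + apply IHn. apply (Cn_mono U n (S n)); [lia|exact Hf]. apply Cn_Derive; exact Hg.
Qed.

Lemma Cn_id n : Cn U n (fun t => t).
Proof.
  destruct n. apply Cn_0.
  apply Cn_step with (g := fun _ => 1); [assumption| |]. intros; auto_derive; [exact I | reflexivity].
  apply Cn_const.
Qed.

Lemma Cn_scal n c f : Cn U n f -> Cn U n (fun t => c * f t).
Proof. intros; apply Cn_mult; auto; apply Cn_const. Qed.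

Lemma Cn_opp n f : Cn U n f -> Cn U n (fun t => - f t).
Proof. intros H. apply Cn_ext with (fun t => (-1) * f t). intros; ring. apply Cn_scal; auto. Qed.

Lemma Cn_minus n f g : Cn U n f -> Cn U n g -> Cn U n (fun t => f t - g t).
Proof. intros; apply Cn_plus; auto; apply Cn_opp; auto. Qed.
End CnU.

Lemma Cn_comp U V n h u : open U -> open V -> (forall t, U t -> V (u t)) ->
  Cn V n h -> Cn U n u -> Cn U n (fun t => h (u t)).
Proof.
  intros HU HV Huv. revert h u Huv; induction n; intros h u Huv Hh Hu. apply Cn_0.
  apply Cn_step with (g := fun t => Derive h (u t) * Derive u t); [assumption| |].
  - intros t Ht. apply ID_comp; [apply (Cn_is_derive U n); assumption|].
    apply (Cn_is_derive V n); [assumption| apply Huv; assumption].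
  - apply (Cn_mult U HU).
    + apply IHn; [assumption| apply Cn_Derive; exact Hh |].
      apply (Cn_mono U n (S n)); [lia|exact Hu].
    + apply Cn_Derive; exact Hu.
Qed.

Lemma ID_R (f : R -> R) t l : derivable_pt_lim f t l -> is_derive f t l.
Proof. intros; apply is_derive_Reals; auto. Qed.

Lemma Cn_sincos n : Cn (fun _ => True) n sin /\ Cn (fun _ => True) n cos.
Proof.
  induction n. split; apply Cn_0.
  destruct IHn as [Hs Hc]. split.
  - apply Cn_step with (g := cos); [apply open_true| |exact Hc].
    intros; apply ID_R, derivable_pt_lim_sin.
  - apply Cn_step with (g := fun t => - sin t); [apply open_true| |].
    intros; apply ID_R, derivable_pt_lim_cos.
    apply Cn_opp; [apply open_true|exact Hs].
Qed.

Definition Upos := fun t : R => 0 < t.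
Lemma open_Upos : open Upos. Proof. apply open_gt. Qed.

Lemma Cn_inv n : Cn Upos n Rinv.
Proof.
  induction n. apply Cn_0.
  apply Cn_step with (g := fun t => - (/ t * / t)); [apply open_Upos| |].
  - intros t Ht. unfold Upos in Ht. auto_derive. lra. field. lra.
  - apply Cn_opp; [apply open_Upos|]. apply Cn_mult; [apply open_Upos|exact IHn|exact IHn].
Qed.

Lemma Cn_sqrt n : Cn Upos n sqrt.
Proof.
  induction n. apply Cn_0.
  apply Cn_step with (g := fun t => / 2 * / sqrt t); [apply open_Upos| |].
  - intros t Ht. unfold Upos in Ht. auto_derive. lra. field.
    apply Rgt_not_eq, sqrt_lt_R0; lra.
  - apply Cn_scal; [apply open_Upos|].
    apply (Cn_comp Upos Upos); [apply open_Upos|apply open_Upos| |apply Cn_inv|exact IHn].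
    intros t Ht; apply sqrt_lt_R0; exact Ht.
Qed.

Definition Uball := fun t : R => -1 < t < 1.
Lemma open_Uball : open Uball.
Proof. apply open_and; [apply open_gt|apply open_lt]. Qed.

Lemma is_derive_asin t : -1 < t < 1 -> is_derive asin t (/ sqrt (1 - t * t)).
Proof.
  intros H. apply ID_R. apply derive_pt_eq_1 with (derivable_pt_asin t H).
  rewrite derive_pt_asin. unfold Rsqr. field.
  apply Rgt_not_eq, sqrt_lt_R0. nra.
Qed.

Lemma Cn_asin n : Cn Uball n asin.
Proof.
  destruct n. apply Cn_0.
  apply Cn_step with (g := fun t => / sqrt (1 - t * t)); [apply open_Uball| |].
  - intros t Ht. apply is_derive_asin; exact Ht.
  - apply (Cn_comp Uball Upos); [apply open_Uball|apply open_Upos| |apply Cn_inv|].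
    + intros t Ht; apply sqrt_lt_R0. unfold Uball in Ht; nra.
    + apply (Cn_comp Uball Upos); [apply open_Uball|apply open_Upos| |apply Cn_sqrt|].
      * intros t Ht. unfold Upos, Uball in *; nra.
      * apply Cn_minus; [apply open_Uball|apply Cn_const, open_Uball|].
        apply Cn_mult; [apply open_Uball| |]; apply Cn_id, open_Uball.
Qed.

Definition aa (k c s : R) := asin ((s - c) / k).
Definition Gx (k w b c s : R) :=
  k / 2 * (sin ((w + 1) * aa k c s + b) / (w + 1) + sin ((w - 1) * aa k c s + b) / (w - 1)).
Definition Gy (k w b c s : R) :=
  - (k / 2) * (cos ((w + 1) * aa k c s + b) / (w + 1) + cos ((w - 1) * aa k c s + b) / (w - 1)).

Lemma sqrt_1mz_pos z : -1 < z < 1 -> 0 < sqrt (1 - z * z).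
Proof. intros; apply sqrt_lt_R0; nra. Qed.

Lemma cos_aa k c s : -1 < (s - c) / k < 1 -> cos (aa k c s) = sqrt (1 - (s - c)/k * ((s - c)/k)).
Proof. intros H; unfold aa; rewrite cos_asin; [reflexivity|lra]. Qed.

Lemma is_derive_aa k c s : 0 < k -> -1 < (s - c) / k < 1 ->
  is_derive (aa k c) s (/ k * / sqrt (1 - (s - c)/k * ((s - c)/k))).
Proof.
  intros Hk H. unfold aa. auto_derive;
  replace ((s + - c) * / k) with ((s-c)/k) by (unfold Rdiv; ring).
  - eexists. apply is_derive_asin. exact H.
  - rewrite (Derive_ext (fun x => asin x) asin) by reflexivity.
    rewrite (is_derive_unique asin _ _ (is_derive_asin _ H)).
    ring.
Qed.

Lemma is_derive_Gx k w b c s : 0 < k -> 1 < w -> -1 < (s - c) / k < 1 ->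
  is_derive (Gx k w b c) s (cos (w * aa k c s + b)).
Proof.
  intros Hk Hw H. unfold Gx, aa.
  pose proof (sqrt_1mz_pos _ H) as Hq.
  assert (Hca : cos (aa k c s) = sqrt (1 - (s - c) / k * ((s - c) / k))) by (apply cos_aa; auto).
  unfold aa in Hca.
  auto_derive; replace ((s + - c) * / k) with ((s-c)/k) by (unfold Rdiv; ring).
  - repeat split; eexists; apply is_derive_asin; exact H.
  - rewrite (Derive_ext (fun x => asin x) asin) by reflexivity.
    rewrite (is_derive_unique asin _ _ (is_derive_asin _ H)).
    set (A := asin ((s - c) / k)) in *.
    set (q := sqrt (1 - (s - c) / k * ((s - c) / k))) in *.
    replace ((w + 1) * A + b) with ((w * A + b) + A) by ring.
    replace ((w - 1) * A + b) with ((w * A + b) - A) by ring.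
    rewrite cos_plus, cos_minus, Hca. field. lra.
Qed.

Lemma is_derive_Gy k w b c s : 0 < k -> 1 < w -> -1 < (s - c) / k < 1 ->
  is_derive (Gy k w b c) s (sin (w * aa k c s + b)).
Proof.
  intros Hk Hw H. unfold Gy, aa.
  pose proof (sqrt_1mz_pos _ H) as Hq.
  assert (Hca : cos (aa k c s) = sqrt (1 - (s - c) / k * ((s - c) / k))) by (apply cos_aa; auto).
  unfold aa in Hca.
  auto_derive; replace ((s + - c) * / k) with ((s-c)/k) by (unfold Rdiv; ring).
  - repeat split; eexists; apply is_derive_asin; exact H.
  - rewrite (Derive_ext (fun x => asin x) asin) by reflexivity.
    rewrite (is_derive_unique asin _ _ (is_derive_asin _ H)).
    set (A := asin ((s - c) / k)) in *.
    set (q := sqrt (1 - (s - c) / k * ((s - c) / k))) in *.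
    replace ((w + 1) * A + b) with ((w * A + b) + A) by ring.
    replace ((w - 1) * A + b) with ((w * A + b) - A) by ring.
    rewrite sin_plus, sin_minus, Hca. field. lra.
Qed.

Lemma is_derive_Tha k w b c s : 0 < k -> -1 < (s - c) / k < 1 ->
  is_derive (fun s => w * aa k c s + b) s (w * (/ k * / sqrt (1 - (s - c)/k * ((s - c)/k)))).
Proof.
  intros Hk H. pose proof (is_derive_aa k c s Hk H) as Ha.
  apply is_derive_Reals in Ha. apply is_derive_Reals.
  apply derivable_pt_lim_ext with (fun s => (w * aa k c s) + b); [reflexivity|].
  replace (w * (/ k * / sqrt (1 - (s - c) / k * ((s - c) / k))))
    with (w * (/ k * / sqrt (1 - (s - c) / k * ((s - c) / k))) + 0) by ring.
  apply (derivable_pt_lim_plus (fun s => w * aa k c s) (fun _ => b)).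
  apply (derivable_pt_lim_scal (aa k c)). exact Ha.
  apply derivable_pt_lim_const.
Qed.

Definition Hx (k w b c s : R) :=
  let z := (s - c) / k in
  k * (z * cos (w * arcsinh z + b) + w * sqrt (z ^ 2 + 1) * sin (w * arcsinh z + b)) / (1 + w ^ 2).

Lemma sqrt_z2p1_pos z : 0 < sqrt (z ^ 2 + 1).
Proof. apply sqrt_lt_R0. nra. Qed.

Lemma is_derive_arcsinh z : is_derive arcsinh z (/ sqrt (z ^ 2 + 1)).
Proof. apply ID_R, derivable_pt_lim_arcsinh. Qed.

Lemma is_derive_Hx k w b c s : 0 < k ->
  is_derive (Hx k w b c) s (cos (w * arcsinh ((s - c) / k) + b)).
Proof.
  intros Hk. unfold Hx.
  pose proof (sqrt_z2p1_pos ((s - c) / k)) as Hq.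
  auto_derive; replace ((s + - c) * / k) with ((s-c)/k) by (unfold Rdiv; ring).
  - repeat split; try (eexists; apply is_derive_arcsinh). pose proof (Rle_0_sqr ((s - c) / k)); unfold Rsqr in *; lra.
  - rewrite (Derive_ext (fun x => arcsinh x) arcsinh) by reflexivity.
    rewrite (is_derive_unique arcsinh _ _ (is_derive_arcsinh _)).
    set (A := arcsinh ((s - c) / k)) in *.
    set (z := (s - c) / k) in *.
    set (q := sqrt (z ^ 2 + 1)) in *.
    replace (z * (z * 1) + 1) with (z ^ 2 + 1) by ring. fold q.
    field. split; [nra|]. split; lra.
Qed.

Lemma is_derive_Thh k w b c s : 0 < k ->
  is_derive (fun s => w * arcsinh ((s - c) / k) + b) s (w * (/ k * / sqrt (((s - c)/k) ^ 2 + 1))).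
Proof.
  intros Hk. pose proof (sqrt_z2p1_pos ((s - c) / k)) as Hq.
  auto_derive; replace ((s + - c) * / k) with ((s-c)/k) by (unfold Rdiv; ring).
  - eexists; apply is_derive_arcsinh.
  - rewrite (Derive_ext (fun x => arcsinh x) arcsinh) by reflexivity.
    rewrite (is_derive_unique arcsinh _ _ (is_derive_arcsinh _)). field. lra.
Qed.


Lemma sol_G x0 L s : 0 < sigma_ x0 L < PI ->
  sol_x x0 L s = Gx (k_ x0 L) (PI / sigma_ x0 L) PI L s /\
  sol_y x0 L s = Gy (k_ x0 L) (PI / sigma_ x0 L) PI L s + PI * x0 / (sigma_ x0 L * tan (sigma_ x0 L)).
Proof.
  intros Hs. unfold sol_x, sol_y, Gx, Gy, a_, aa.
  set (sg := sigma_ x0 L) in *. set (k := k_ x0 L). set (a := asin ((s - L) / k)).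
  pose proof PI_RGT_0.
  replace ((PI / sg + 1) * a + PI) with ((PI + sg) / sg * a + PI) by (field; lra).
  replace ((PI / sg - 1) * a + PI) with ((PI - sg) / sg * a + PI) by (field; lra).
  rewrite !neg_sin, !neg_cos.
  replace (PI / sg + 1) with ((PI + sg) / sg) by (field; lra).
  replace (PI / sg - 1) with ((PI - sg) / sg) by (field; lra).
  set (T := PI * x0 / (sg * tan sg)).
  split; field; repeat split; lra.
Qed.

Lemma ID_const (c t : R) : is_derive (fun _ => c) t 0.
Proof. apply ID_R, derivable_pt_lim_const. Qed.
Lemma ID_id (t : R) : is_derive (fun x => x) t 1.
Proof. apply ID_R, derivable_pt_lim_id. Qed.

Lemma ID_cont (f : R -> R) t l : is_derive f t l -> continuity_pt f t.
Proof.
  intros H. apply is_derive_Reals in H. apply derivable_continuous_pt.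
  exists l; exact H.
Qed.

Lemma eq_deriv_closed (f g df : R -> R) a b :
  a <= b ->
  (forall t, a < t < b -> is_derive f t (df t)) ->
  (forall t, a < t < b -> is_derive g t (df t)) ->
  (forall t, a <= t <= b -> continuity_pt f t) ->
  (forall t, a <= t <= b -> continuity_pt g t) ->
  forall t, a <= t <= b -> f t - f a = g t - g a.
Proof.
  intros Hab Hf Hg Cf Cg t Ht.
  destruct (MVT_gen (fun u => f u - g u) a t (fun _ => 0)) as [c [Hc E]].
  - rewrite Rmin_left, Rmax_right by lra. intros u Hu.
    eapply ID_ext; [intros; reflexivity| |apply (is_derive_minus f g); [apply Hf|apply Hg]; lra].
    simpl. unfold minus, plus, opp; simpl. ring.
  - rewrite Rmin_left, Rmax_right by lra. intros u Hu.
    apply continuity_pt_minus; [apply Cf|apply Cg]; lra.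
  - simpl in E. lra.
Qed.

Lemma const_closed (f : R -> R) a b :
  a <= b -> (forall t, a < t < b -> is_derive f t 0) ->
  (forall t, a <= t <= b -> continuity_pt f t) ->
  forall t, a <= t <= b -> f t = f a.
Proof.
  intros Hab Hf Cf t Ht.
  pose proof (eq_deriv_closed f (fun _ => 0) (fun _ => 0) a b Hab Hf) as H.
  assert (f t - f a = 0 - 0); [|lra].
  apply H; auto.
  - intros; apply ID_const.
  - intros; apply continuity_pt_const; intros u v; reflexivity.
Qed.

Lemma eq_deriv_open (f g df : R -> R) a b :
  (forall t, a < t < b -> is_derive f t (df t)) ->
  (forall t, a < t < b -> is_derive g t (df t)) ->
  forall t u, a < t < b -> a < u < b -> f t - f u = g t - g u.
Proof.
  intros Hf Hg t u Ht Hu.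
  assert (K : forall p q, a < p < b -> a < q < b -> p <= q -> f q - f p = g q - g p).
  { intros p q Hp Hq Hpq.
    apply (eq_deriv_closed f g df p q Hpq).
    - intros v Hv; apply Hf; lra.
    - intros v Hv; apply Hg; lra.
    - intros v Hv; apply (ID_cont _ _ _ (Hf v ltac:(lra))).
    - intros v Hv; apply (ID_cont _ _ _ (Hg v ltac:(lra))).
    - lra. }
  destruct (Rle_dec u t).
  - apply K; auto.
  - assert (f u - f t = g u - g t) by (apply K; auto; lra). lra.
Qed.

Lemma MVT_open (f df : R -> R) a b : a < b ->
  (forall t, a < t < b -> is_derive f t (df t)) ->
  (forall t, a <= t <= b -> continuity_pt f t) ->
  exists c, a < c < b /\ f b - f a = df c * (b - a).
Proof.
  intros Hab Hf Cf.
  assert (pr1 : forall c, a < c < b -> derivable_pt f c).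
  { intros c Hc. exists (df c). apply is_derive_Reals, Hf, Hc. }
  assert (pr2 : forall c, a < c < b -> derivable_pt id c).
  { intros c Hc. apply derivable_pt_id. }
  destruct (MVT f id a b pr1 pr2 Hab Cf) as [c [P E]].
  { intros; apply derivable_continuous_pt, derivable_pt_id. }
  exists c; split; auto.
  rewrite (derive_pt_eq_0 f c (df c) (pr1 c P)) in E by (apply is_derive_Reals, Hf, P).
  rewrite (derive_pt_eq_0 id c 1 (pr2 c P)) in E by apply derivable_pt_lim_id.
  unfold id in E. lra.
Qed.

Lemma incr_closed (f df : R -> R) a b :
  (forall t, a < t < b -> is_derive f t (df t)) ->
  (forall t, a < t < b -> 0 < df t) ->
  (forall t, a <= t <= b -> continuity_pt f t) ->
  forall t u, a <= t -> t < u -> u <= b -> f t < f u.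
Proof.
  intros Hf Hp Cf t u Ht Htu Hu.
  destruct (MVT_open f df t u Htu) as [c [Hc E]].
  - intros v Hv; apply Hf; lra.
  - intros v Hv; apply Cf; lra.
  - assert (0 < df c) by (apply Hp; lra). nra.
Qed.

Lemma cont_right_val (g : R -> R) a b c : a < b -> continuity_pt g a ->
  (forall s, a < s < b -> g s = c) -> g a = c.
Proof.
  intros Hab Cg H. rewrite continuity_pt_locally in Cg.
  destruct (Req_dec (g a) c) as [|Hne]; auto. exfalso.
  assert (He : 0 < Rabs (g a - c)) by (apply Rabs_pos_lt; lra).
  destruct (Cg (mkposreal _ He)) as [d Hd]. simpl in Hd.
  set (s := a + Rmin (d / 2) ((b - a) / 2)).
  assert (Hs1 : a < s < b).
  { unfold s. pose proof (cond_pos d). unfold Rmin; destruct Rle_dec; lra. }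
  assert (Hs2 : Rabs (s - a) < d).
  { unfold s. pose proof (cond_pos d). rewrite Rabs_right; unfold Rmin; destruct Rle_dec; lra. }
  specialize (Hd s Hs2). rewrite H in Hd by exact Hs1.
  rewrite <- Rabs_Ropp in Hd. replace (- (c - g a)) with (g a - c) in Hd by ring. lra.
Qed.

Lemma cont_left_val (g : R -> R) a b c : a < b -> continuity_pt g b ->
  (forall s, a < s < b -> g s = c) -> g b = c.
Proof.
  intros Hab Cg H. rewrite continuity_pt_locally in Cg.
  destruct (Req_dec (g b) c) as [|Hne]; auto. exfalso.
  assert (He : 0 < Rabs (g b - c)) by (apply Rabs_pos_lt; lra).
  destruct (Cg (mkposreal _ He)) as [d Hd]. simpl in Hd.
  set (s := b - Rmin (d / 2) ((b - a) / 2)).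
  assert (Hs1 : a < s < b).
  { unfold s. pose proof (cond_pos d). unfold Rmin; destruct Rle_dec; lra. }
  assert (Hs2 : Rabs (s - b) < d).
  { unfold s. pose proof (cond_pos d). rewrite Rabs_left; unfold Rmin; destruct Rle_dec; lra. }
  specialize (Hd s Hs2). rewrite H in Hd by exact Hs1.
  rewrite <- Rabs_Ropp in Hd. replace (- (c - g b)) with (g b - c) in Hd by ring. lra.
Qed.

Lemma CP_plus (f g : R -> R) t : continuity_pt f t -> continuity_pt g t -> continuity_pt (fun u => f u + g u) t.
Proof. apply continuity_pt_plus. Qed.
Lemma CP_minus (f g : R -> R) t : continuity_pt f t -> continuity_pt g t -> continuity_pt (fun u => f u - g u) t.
Proof. apply continuity_pt_minus. Qed.
Lemma CP_mult (f g : R -> R) t : continuity_pt f t -> continuity_pt g t -> continuity_pt (fun u => f u * g u) t.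
Proof. apply continuity_pt_mult. Qed.
Lemma CP_const (c t : R) : continuity_pt (fun _ => c) t.
Proof. apply continuity_pt_const. intros ? ?; reflexivity. Qed.
Lemma CP_id (t : R) : continuity_pt (fun u => u) t.
Proof. apply derivable_continuous_pt, derivable_pt_id. Qed.
Lemma CP_comp (f g : R -> R) t : continuity_pt g t -> continuity_pt f (g t) -> continuity_pt (fun u => f (g u)) t.
Proof. intros; apply (continuity_pt_comp g f); auto. Qed.
Lemma CP_sin (t : R) : continuity_pt sin t.
Proof. apply continuity_sin. Qed.
Lemma CP_cos (t : R) : continuity_pt cos t.
Proof. apply continuity_cos. Qed.

Lemma sin2_cos2' a : sin a * sin a + cos a * cos a = 1.
Proof. pose proof (sin2_cos2 a). unfold Rsqr in H. lra. Qed.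

Lemma choice_R (P : R -> R -> Prop) : (forall s, exists t, P s t) -> exists f, forall s, P s (f s).
Proof.
  intros H. exists (fun s => proj1_sig (constructive_indefinite_description _ (H s))).
  intros s. exact (proj2_sig (constructive_indefinite_description _ (H s))).
Qed.

Lemma SQ (x y : R -> R) s a b : derivable_pt_lim x s a -> derivable_pt_lim y s b ->
  a * a + b * b = 1 ->
  forall eta, 0 < eta -> exists d, 0 < d /\ forall h, h <> 0 -> Rabs h < d ->
    Rabs (((x (s + h) - x s) ^ 2 + (y (s + h) - y s) ^ 2) / h ^ 2 - 1) < eta.
Proof.
  intros Hx Hy Hab eta Heta.
  set (e := Rmin 1 (eta / 6)).
  assert (He : 0 < e) by (unfold e, Rmin; destruct Rle_dec; lra).
  assert (He1 : e <= 1) by (unfold e; apply Rmin_l).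
  assert (He2 : e <= eta / 6) by (unfold e; apply Rmin_r).
  destruct (Hx e He) as [d1 H1]. destruct (Hy e He) as [d2 H2].
  exists (Rmin d1 d2). split. { pose proof (cond_pos d1); pose proof (cond_pos d2); unfold Rmin; destruct Rle_dec; lra. }
  intros h Hh Hhd.
  assert (Hh1 : Rabs h < d1) by (eapply Rlt_le_trans; [exact Hhd| apply Rmin_l]).
  assert (Hh2 : Rabs h < d2) by (eapply Rlt_le_trans; [exact Hhd| apply Rmin_r]).
  specialize (H1 h Hh Hh1). specialize (H2 h Hh Hh2).
  set (p := (x (s + h) - x s) / h) in *. set (q := (y (s + h) - y s) / h) in *.
  replace (((x (s + h) - x s) ^ 2 + (y (s + h) - y s) ^ 2) / h ^ 2) with (p * p + q * q)
    by (unfold p, q; field; auto).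
  apply Rabs_def2 in H1. apply Rabs_def2 in H2. destruct H1, H2.
  assert (Ha : -1 <= a <= 1) by nra. assert (Hb : -1 <= b <= 1) by nra.
  apply Rabs_def1; nra.
Qed.

Section Sym.
Variables (x y : R -> R) (dx dy : R -> R) (L x0 : R).
Hypothesis hL : 0 < L.
Hypothesis Cx : forall t, 0 <= t <= 2 * L -> continuity_pt x t.
Hypothesis Cy : forall t, 0 <= t <= 2 * L -> continuity_pt y t.
Hypothesis Dx : forall t, 0 < t < 2 * L -> is_derive x t (dx t).
Hypothesis Dy : forall t, 0 < t < 2 * L -> is_derive y t (dy t).
Hypothesis Harc : forall t, 0 < t < 2 * L -> dx t * dx t + dy t * dy t = 1.
Hypothesis Hinj : forall s t, 0 <= s <= 2 * L -> 0 <= t <= 2 * L ->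
     x s = x t -> y s = y t -> s = t.
Hypothesis Hsym : forall s, 0 <= s <= 2 * L ->
    exists t, 0 <= t <= 2 * L /\ x t = - x s /\ y t = y s.
Hypothesis Hx0 : x 0 = x0.
Hypothesis Hy0 : y 0 = 0.
Hypothesis Hx2 : x (2 * L) = - x0.
Hypothesis Hy2 : y (2 * L) = 0.

Lemma phi_ex : exists phi : R -> R, forall s, 0 <= s <= 2 * L ->
  0 <= phi s <= 2 * L /\ x (phi s) = - x s /\ y (phi s) = y s.
Proof.
  apply (choice_R (fun s t => 0 <= s <= 2 * L -> 0 <= t <= 2 * L /\ x t = - x s /\ y t = y s)).
  intros s. destruct (classic (0 <= s <= 2 * L)) as [H|H].
  - destruct (Hsym s H) as [t Ht]. exists t; auto.
  - exists 0. intros; contradiction.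
Qed.

Variable phi : R -> R.
Hypothesis Hphi : forall s, 0 <= s <= 2 * L ->
  0 <= phi s <= 2 * L /\ x (phi s) = - x s /\ y (phi s) = y s.

Lemma phi_inj s t : 0 <= s <= 2 * L -> 0 <= t <= 2 * L -> phi s = phi t -> s = t.
Proof.
  intros Hs Ht E. destruct (Hphi s Hs) as [B1 [X1 Y1]]. destruct (Hphi t Ht) as [B2 [X2 Y2]].
  rewrite E in X1, Y1. apply Hinj; auto; lra.
Qed.

Lemma phi_0 : phi 0 = 2 * L.
Proof.
  destruct (Hphi 0 ltac:(lra)) as [B [X Y]]. apply Hinj; auto; lra.
Qed.

Lemma phi_2L : phi (2 * L) = 0.
Proof.
  destruct (Hphi (2 * L) ltac:(lra)) as [B [X Y]]. apply Hinj; auto; lra.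
Qed.

Definition gdist (v t : R) := (x t - x v) ^ 2 + (y t - y v) ^ 2.

Lemma gdist_cont v t : 0 <= t <= 2 * L -> continuity_pt (gdist v) t.
Proof.
  intros Ht. unfold gdist. apply CP_plus.
  - apply (CP_comp (fun u => u ^ 2) (fun t => x t - x v)).
    apply CP_minus; [apply Cx; auto|apply CP_const].
    apply derivable_continuous_pt, derivable_pt_pow.
  - apply (CP_comp (fun u => u ^ 2) (fun t => y t - y v)).
    apply CP_minus; [apply Cy; auto|apply CP_const].
    apply derivable_continuous_pt, derivable_pt_pow.
Qed.

Lemma gdist_pos v t : 0 <= v <= 2 * L -> 0 <= t <= 2 * L -> t <> v -> 0 < gdist v t.
Proof.
  intros Hv Ht Hne. unfold gdist.
  destruct (Rle_lt_dec ((x t - x v) ^ 2 + (y t - y v) ^ 2) 0) as [H|H]; auto.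
  exfalso. pose proof (pow2_ge_0 (x t - x v)); pose proof (pow2_ge_0 (y t - y v)).
  assert (E1 : (x t - x v) ^ 2 = 0) by lra. assert (E2 : (y t - y v) ^ 2 = 0) by lra.
  assert (x t - x v = 0) by nra. assert (y t - y v = 0) by nra.
  apply Hne; apply Hinj; auto; lra.
Qed.

Lemma gdist_min v a b : 0 <= v <= 2 * L -> 0 <= a -> b <= 2 * L ->
  (forall t, a <= t <= b -> t <> v) ->
  exists m, 0 < m /\ forall t, a <= t <= b -> m <= gdist v t.
Proof.
  intros Hv Ha Hb Hne. destruct (Rle_lt_dec a b) as [Hab|Hab].
  - assert (Hc : forall c, a <= c <= b -> continuity_pt (gdist v) c).
    { intros c Hc; apply gdist_cont; lra. }
    destruct (continuity_ab_min (gdist v) a b Hab Hc) as [c [Hc1 Hc2]].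
    exists (gdist v c). split; [|exact Hc1].
    apply gdist_pos; [exact Hv|lra|]. apply Hne; exact Hc2.
  - exists 1. split; [lra|]. intros; lra.
Qed.

Lemma phi_cont s : 0 <= s <= 2 * L -> forall eps, 0 < eps -> exists d, 0 < d /\
  forall s', 0 <= s' <= 2 * L -> Rabs (s' - s) < d -> Rabs (phi s' - phi s) < eps.
Proof.
  intros Hs eps Heps. destruct (Hphi s Hs) as [Hv [Xv Yv]]. set (v := phi s) in *.
  destruct (gdist_min v 0 (v - eps)) as [m1 [Hm1 H1]]; try lra.
  { intros t Ht; lra. }
  destruct (gdist_min v (v + eps) (2 * L)) as [m2 [Hm2 H2]]; try lra.
  { intros t Ht; lra. }
  set (m := Rmin m1 m2).
  assert (Hm : 0 < m) by (unfold m, Rmin; destruct Rle_dec; lra).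
  assert (Hmm : forall t, 0 <= t <= 2 * L -> eps <= Rabs (t - v) -> m <= gdist v t).
  { intros t Ht Ha. destruct (Rle_lt_dec t v).
    - rewrite Rabs_left1 in Ha by lra. eapply Rle_trans; [apply Rmin_l|apply H1; lra].
    - rewrite Rabs_right in Ha by lra. eapply Rle_trans; [apply Rmin_r|apply H2; lra]. }
  set (eta := Rmin 1 (m / 4)).
  assert (He : 0 < eta) by (unfold eta, Rmin; destruct Rle_dec; lra).
  assert (He1 : eta <= 1) by apply Rmin_l. assert (He2 : eta <= m / 4) by apply Rmin_r.
  pose proof (Cx s Hs) as Cxs. pose proof (Cy s Hs) as Cys.
  rewrite continuity_pt_locally in Cxs, Cys.
  destruct (Cxs (mkposreal _ He)) as [d1 Hd1]. destruct (Cys (mkposreal _ He)) as [d2 Hd2].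
  simpl in Hd1, Hd2.
  exists (Rmin d1 d2). split. { pose proof (cond_pos d1); pose proof (cond_pos d2); unfold Rmin; destruct Rle_dec; lra. }
  intros s' Hs' Hd.
  assert (A1 : Rabs (s' - s) < d1) by (eapply Rlt_le_trans; [exact Hd|apply Rmin_l]).
  assert (A2 : Rabs (s' - s) < d2) by (eapply Rlt_le_trans; [exact Hd|apply Rmin_r]).
  specialize (Hd1 s' A1). specialize (Hd2 s' A2).
  destruct (Hphi s' Hs') as [Hv' [Xv' Yv']].
  destruct (Rlt_le_dec (Rabs (phi s' - v)) eps) as [Hlt|Hge]; auto.
  exfalso. specialize (Hmm (phi s') Hv' Hge). unfold gdist in Hmm.
  rewrite Xv', Yv', Xv, Yv in Hmm.
  apply Rabs_def2 in Hd1. apply Rabs_def2 in Hd2. destruct Hd1, Hd2.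
  nra.
Qed.

Definition psi (t : R) := phi (Rmax 0 (Rmin (2 * L) t)).

Lemma clamp_in t : 0 <= Rmax 0 (Rmin (2 * L) t) <= 2 * L.
Proof. unfold Rmax, Rmin; repeat destruct Rle_dec; lra. Qed.

Lemma clamp_id t : 0 <= t <= 2 * L -> Rmax 0 (Rmin (2 * L) t) = t.
Proof. intros; unfold Rmax, Rmin; repeat destruct Rle_dec; lra. Qed.

Lemma clamp_lip t u : Rabs (Rmax 0 (Rmin (2 * L) t) - Rmax 0 (Rmin (2 * L) u)) <= Rabs (t - u).
Proof.
  unfold Rmax, Rmin; repeat destruct Rle_dec;
  repeat match goal with |- context [Rabs ?z] => destruct (Rcase_abs z) as [?|?];
    [rewrite (Rabs_left z) by assumption| rewrite (Rabs_right z) by assumption] end; lra.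
Qed.

Lemma psi_cont : continuity psi.
Proof.
  intros t. rewrite continuity_pt_locally. intros eps.
  destruct (phi_cont (Rmax 0 (Rmin (2 * L) t)) (clamp_in t) eps (cond_pos eps)) as [d [Hd H]].
  exists (mkposreal d Hd). intros u Hu. simpl in Hu. unfold psi.
  apply H. apply clamp_in.
  eapply Rle_lt_trans; [apply clamp_lip|exact Hu].
Qed.

Lemma psi_eq t : 0 <= t <= 2 * L -> psi t = phi t.
Proof. intros; unfold psi; rewrite clamp_id; auto. Qed.

Lemma phi_decr s t : 0 <= s <= 2 * L -> 0 <= t <= 2 * L -> s < t -> phi t < phi s.
Proof.
  intros Hs Ht Hst.
  destruct (Rlt_le_dec (phi t) (phi s)) as [|Hle]; auto. exfalso.
  destruct (Req_dec (phi t) (phi s)) as [E|Hne].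
  { apply phi_inj in E; auto; lra. }
  assert (Hlt : phi s < phi t) by lra.
  destruct (Req_dec s 0) as [Es|Hs0].
  { subst s. rewrite phi_0 in Hlt. destruct (Hphi t Ht); lra. }
  destruct (IVT_gen psi 0 s (phi t) psi_cont) as [r [Hr Er]].
  { rewrite psi_eq, psi_eq, phi_0 by lra. destruct (Hphi t Ht).
    unfold Rmin, Rmax; destruct Rle_dec; lra. }
  rewrite Rmin_left, Rmax_right in Hr by lra.
  rewrite psi_eq in Er by lra. apply phi_inj in Er; lra.
Qed.
Lemma rho_bound Q1 Q2 rho eta eps : Rabs (Q1 - 1) < eta -> Rabs (Q2 - 1) < eta ->
  eta <= 1/2 -> eta <= eps / 4 -> Q1 = Q2 * (rho * rho) -> rho < 0 -> Rabs (rho - -1) < eps.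
Proof.
  intros H1 H2 He1 He2 E Hr.
  apply Rabs_def2 in H1; apply Rabs_def2 in H2. destruct H1, H2.
  assert (HQ2 : 1/2 < Q2) by lra.
  assert (Hr2 : Rabs (rho * rho - 1) < eps).
  { assert (rho * rho - 1 = (Q1 - Q2) / Q2) by (rewrite E; field; lra).
    rewrite H3. unfold Rdiv. rewrite Rabs_mult, Rabs_inv.
    rewrite (Rabs_right Q2) by lra.
    apply Rmult_lt_reg_r with Q2; [lra|]. rewrite Rmult_assoc, Rinv_l, Rmult_1_r by lra.
    apply Rabs_def1; nra. }
  apply Rabs_def2 in Hr2. destruct Hr2.
  apply Rabs_def1; nra.
Qed.

Lemma phi_deriv s : 0 < s < 2 * L -> derivable_pt_lim psi s (-1).
Proof.
  intros Hs eps Heps.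
  destruct (Hphi s ltac:(lra)) as [Hv [Xv Yv]]. set (v := phi s) in *.
  assert (Hv' : 0 < v < 2 * L).
  { split.
    - destruct (Req_dec v 0) as [E|E]; [|lra]. rewrite <- phi_2L in E.
      apply phi_inj in E; lra.
    - destruct (Req_dec v (2 * L)) as [E|E]; [|lra]. rewrite <- phi_0 in E.
      apply phi_inj in E; lra. }
  set (eta := Rmin (1/2) (eps/4)).
  assert (He : 0 < eta) by (unfold eta, Rmin; destruct Rle_dec; lra).
  assert (He1 : eta <= 1/2) by apply Rmin_l. assert (He2 : eta <= eps/4) by apply Rmin_r.
  destruct (SQ x y s (dx s) (dy s) (proj1 (is_derive_Reals _ _ _) (Dx s Hs))
     (proj1 (is_derive_Reals _ _ _) (Dy s Hs)) (Harc s Hs) eta He) as [d1 [Hd1 H1]].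
  destruct (SQ x y v (dx v) (dy v) (proj1 (is_derive_Reals _ _ _) (Dx v Hv'))
     (proj1 (is_derive_Reals _ _ _) (Dy v Hv')) (Harc v Hv') eta He) as [d2 [Hd2 H2]].
  destruct (phi_cont s ltac:(lra) d2 Hd2) as [d3 [Hd3 H3]].
  set (d := Rmin (Rmin d1 d3) (Rmin s (2 * L - s))).
  assert (Hd : 0 < d) by (unfold d, Rmin; repeat destruct Rle_dec; lra).
  exists (mkposreal d Hd). intros h Hh Hhd. simpl in Hhd.
  assert (Hd1' : Rabs h < d1) by (eapply Rlt_le_trans; [exact Hhd|]; unfold d, Rmin; repeat destruct Rle_dec; lra).
  assert (Hd3' : Rabs h < d3) by (eapply Rlt_le_trans; [exact Hhd|]; unfold d, Rmin; repeat destruct Rle_dec; lra).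
  assert (Hd4 : Rabs h < s /\ Rabs h < 2 * L - s) by (split; eapply Rlt_le_trans; try exact Hhd; unfold d, Rmin; repeat destruct Rle_dec; lra).
  assert (Ht : 0 < s + h < 2 * L) by (destruct Hd4 as [A B]; apply Rabs_def2 in A; apply Rabs_def2 in B; lra).
  rewrite psi_eq, psi_eq by lra. fold v.
  set (kk := phi (s + h) - v).
  assert (Hk : kk <> 0).
  { unfold kk. intros E. assert (phi (s + h) = phi s) by (fold v; lra).
    apply phi_inj in H; lra. }
  assert (Hkd : Rabs kk < d2).
  { apply H3; [lra|]. replace (s + h - s) with h by ring. exact Hd3'. }
  specialize (H1 h Hh Hd1'). specialize (H2 kk Hk Hkd).
  destruct (Hphi (s + h) ltac:(lra)) as [Ht' [Xt Yt]].
  replace (v + kk) with (phi (s + h)) in H2 by (unfold kk; ring).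
  rewrite Xt, Yt, Xv, Yv in H2.
  set (Num := (x (s + h) - x s) ^ 2 + (y (s + h) - y s) ^ 2) in *.
  replace ((- x (s + h) - - x s) ^ 2 + (y (s + h) - y s) ^ 2) with Num in H2 by (unfold Num; ring).
  replace (phi (s + h) - v) with kk by reflexivity.
  apply (rho_bound (Num / h ^ 2) (Num / kk ^ 2) (kk / h) eta eps); auto.
  - field. auto.
  - destruct (Rlt_le_dec 0 h) as [Hp|Hn].
    + assert (phi (s + h) < phi s) by (apply phi_decr; lra).
      assert (kk < 0) by (unfold kk; fold v in H; lra).
      apply Rmult_lt_reg_r with h; auto. unfold Rdiv. rewrite Rmult_assoc, Rinv_l; lra.
    + assert (Hn' : h < 0) by lra.
      assert (phi s < phi (s + h)) by (apply phi_decr; lra).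
      assert (0 < kk) by (unfold kk; fold v in H; lra).
      unfold Rdiv. apply Rmult_lt_reg_r with (- h); [lra|].
      replace (kk * / h * - h) with (- kk) by (field; lra). lra.
Qed.

Lemma sym_result : forall s, 0 <= s <= 2 * L -> x (2 * L - s) = - x s /\ y (2 * L - s) = y s.
Proof.
  assert (E : forall t, 0 <= t <= 2 * L -> psi t + t = psi 0 + 0).
  { apply (const_closed (fun t => psi t + t) 0 (2 * L)). lra.
    - intros t Ht. apply is_derive_Reals.
      replace 0 with (-1 + 1) by ring.
      apply (derivable_pt_lim_plus psi (fun u => u)). apply phi_deriv; auto.
      apply derivable_pt_lim_id.
    - intros t Ht. apply CP_plus; [apply psi_cont|apply CP_id]. }
  intros s Hs. specialize (E s Hs). rewrite psi_eq, psi_eq, phi_0 in E by lra.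
  replace (2 * L - s) with (phi s) by lra.
  destruct (Hphi s Hs) as [_ [X Y]]. auto.
Qed.
End Sym.

Lemma Cn_sub (U V : R -> Prop) n f : (forall t, U t -> V t) -> Cn V n f -> Cn U n f.
Proof. intros H Hf k t Hk Ht. apply Hf; auto. Qed.


Section Uniq.
Variables (x0 L lam e : R) (x y : R -> R).
Hypothesis hx0 : 0 < x0.
Hypothesis hL : 0 < L.
Hypothesis He : 0 < e.
Hypothesis Hxs : forall n t, -e < t < 2 * L + e -> ex_derive_n x n t.
Hypothesis Hys : forall n t, -e < t < 2 * L + e -> ex_derive_n y n t.
Hypothesis Hcurv : forall s, 0 <= s <= 2 * L -> 0 < curvature x y s.
Hypothesis Hinj : forall s t, 0 <= s <= 2 * L -> 0 <= t <= 2 * L ->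
     x s = x t -> y s = y t -> s = t.
Hypothesis Hx0 : x 0 = x0.
Hypothesis Hy0 : y 0 = 0.
Hypothesis Hx2 : x (2 * L) = - x0.
Hypothesis Hy2 : y (2 * L) = 0.
Hypothesis Hypos : forall s, 0 < s < 2 * L -> 0 < y s.
Hypothesis Hsym : vert_symmetric L x y.
Hypothesis Harc : arclength_param L x y.
Hypothesis Hdy0 : Derive y 0 = 0.
Hypothesis Hdy2 : Derive y (2 * L) = 0.
Hypothesis Hode : forall s, 0 <= s <= 2 * L ->
     2 + Derive_n (fun t => / (curvature x y t) ^ 2) 2 s = lam.
Hypothesis Hlam : 0 < lam.

Definition Ie t := -e < t < 2 * L + e.
Lemma open_I : open Ie.
Proof. apply open_and; [apply open_gt|apply open_lt]. Qed.
Lemma I_in t : 0 <= t <= 2 * L -> Ie t.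
Proof. unfold Ie; lra. Qed.

Lemma xCn n : Cn Ie n x.
Proof. intros k t Hk Ht. apply Hxs; auto. Qed.
Lemma yCn n : Cn Ie n y.
Proof. intros k t Hk Ht. apply Hys; auto. Qed.

Lemma Dx t : Ie t -> is_derive x t (Derive x t).
Proof. intros; apply (Cn_is_derive Ie 0); auto. apply xCn. Qed.
Lemma Dy t : Ie t -> is_derive y t (Derive y t).
Proof. intros; apply (Cn_is_derive Ie 0); auto. apply yCn. Qed.
Lemma DDx t : Ie t -> is_derive (Derive x) t (Derive (Derive x) t).
Proof. intros; apply (Cn_is_derive Ie 0); auto. apply Cn_Derive, xCn. Qed.
Lemma DDy t : Ie t -> is_derive (Derive y) t (Derive (Derive y) t).
Proof. intros; apply (Cn_is_derive Ie 0); auto. apply Cn_Derive, yCn. Qed.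
Lemma DDDx t : Ie t -> is_derive (Derive (Derive x)) t (Derive (Derive (Derive x)) t).
Proof. intros; apply (Cn_is_derive Ie 0); auto. apply Cn_Derive, Cn_Derive, xCn. Qed.
Lemma DDDy t : Ie t -> is_derive (Derive (Derive y)) t (Derive (Derive (Derive y)) t).
Proof. intros; apply (Cn_is_derive Ie 0); auto. apply Cn_Derive, Cn_Derive, yCn. Qed.

Lemma Harc' s : 0 <= s <= 2 * L -> Derive x s * Derive x s + Derive y s * Derive y s = 1.
Proof. intros H; pose proof (Harc s H); simpl in *; lra. Qed.

Definition N t := Derive x t * Derive (Derive y) t - Derive y t * Derive (Derive x) t.

Lemma curvN s : 0 <= s <= 2 * L -> curvature x y s = N s.
Proof.
  intros H. unfold curvature. rewrite (Harc s H), sqrt_1. unfold N. simpl. field.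
Qed.

Lemma Npos s : 0 <= s <= 2 * L -> 0 < N s.
Proof. intros H; rewrite <- curvN; auto. Qed.

Lemma arc01 t : 0 < t < 2 * L ->
  Derive x t * Derive (Derive x) t + Derive y t * Derive (Derive y) t = 0.
Proof.
  intros Ht.
  assert (Hi : Ie t) by (apply I_in; lra).
  pose proof (ID_plus _ _ t _ _ (ID_mult _ _ t _ _ (DDx t Hi) (DDx t Hi))
                               (ID_mult _ _ t _ _ (DDy t Hi) (DDy t Hi))) as H1.
  assert (H2 : is_derive (fun u => Derive x u * Derive x u + Derive y u * Derive y u) t 0).
  { apply is_derive_ext_loc with (fun _ => 1).
    - assert (Ho : open (fun u => 0 < u < 2 * L)) by (apply open_and; [apply open_gt|apply open_lt]).
      apply (filter_imp (fun u => 0 < u < 2 * L)); [|apply Ho; auto].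
      intros u Hu. symmetry. apply Harc'. lra.
    - apply ID_const. }
  apply is_derive_unique in H1. apply is_derive_unique in H2. rewrite H1 in H2. lra.
Qed.

Lemma odex t : 0 < t < 2 * L -> Derive (Derive x) t = - N t * Derive y t.
Proof.
  intros Ht. pose proof (arc01 t Ht). pose proof (Harc' t ltac:(lra)). unfold N.
  set (a := Derive x t) in *. set (b := Derive y t) in *.
  set (c := Derive (Derive x) t) in *. set (d := Derive (Derive y) t) in *.
  transitivity (c * (a * a + b * b)); [rewrite H0; ring|].
  replace (c * (a * a + b * b)) with (a * (a * c + b * d) - (a * d - b * c) * b) by ring.
  rewrite H; ring.
Qed.

Lemma odey t : 0 < t < 2 * L -> Derive (Derive y) t = N t * Derive x t.
Proof.
  intros Ht. pose proof (arc01 t Ht). pose proof (Harc' t ltac:(lra)). unfold N.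
  set (a := Derive x t) in *. set (b := Derive y t) in *.
  set (c := Derive (Derive x) t) in *. set (d := Derive (Derive y) t) in *.
  transitivity (d * (a * a + b * b)); [rewrite H0; ring|].
  replace (d * (a * a + b * b)) with (b * (a * c + b * d) + (a * d - b * c) * a) by ring.
  rewrite H; ring.
Qed.

Definition U0 t := 0 < t < 2 * L.
Lemma open_U0 : open U0.
Proof. apply open_and; [apply open_gt|apply open_lt]. Qed.
Lemma U0_I t : U0 t -> Ie t.
Proof. unfold U0, Ie; lra. Qed.

Definition F t := / (N t) ^ 2.

Lemma NCn n : Cn U0 n N.
Proof.
  apply (Cn_sub U0 Ie); [apply U0_I|]. unfold N.
  apply Cn_minus; [apply open_I| |]; apply Cn_mult; try apply open_I.
  - apply Cn_Derive, xCn.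
  - apply Cn_Derive, Cn_Derive, yCn.
  - apply Cn_Derive, yCn.
  - apply Cn_Derive, Cn_Derive, xCn.
Qed.

Lemma FCn n : Cn U0 n F.
Proof.
  apply Cn_ext with (fun t => / (N t * N t)). { intros; unfold F; simpl; f_equal; ring. }
  apply (Cn_comp U0 Upos n Rinv (fun t => N t * N t)); [apply open_U0|apply open_Upos| |apply Cn_inv|].
  - intros t Ht. unfold Upos. pose proof (Npos t ltac:(unfold U0 in Ht; lra)). nra.
  - apply Cn_mult; [apply open_U0|apply NCn|apply NCn].
Qed.

Lemma F_ode s : 0 < s < 2 * L -> Derive (Derive F) s = lam - 2.
Proof.
  intros Hs. rewrite <- (Hode s ltac:(lra)).
  change (Derive (Derive F) s) with (Derive_n F 2 s).
  assert (Derive_n F 2 s = Derive_n (fun t => / (curvature x y t) ^ 2) 2 s); [|lra].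
  apply Derive_n_ext_loc.
  apply (filter_imp U0); [|apply open_U0; exact Hs].
  intros u Hu. unfold F. rewrite curvN; auto. unfold U0 in Hu; lra.
Qed.

Definition qA := F L.
Definition qB := Derive F L.
Definition qC := (lam - 2) / 2.

Lemma F_quad s : 0 < s < 2 * L -> F s = qA + qB * (s - L) + qC * (s - L) ^ 2.
Proof.
  intros Hs.
  assert (HL : 0 < L < 2 * L) by lra.
  assert (D1 : forall t, 0 < t < 2 * L -> is_derive F t (Derive F t)).
  { intros t Ht; apply (Cn_is_derive U0 0); auto. apply FCn. }
  assert (D2 : forall t, 0 < t < 2 * L -> is_derive (Derive F) t (lam - 2)).
  { intros t Ht. rewrite <- (F_ode t Ht). apply (Cn_is_derive U0 0); auto. apply Cn_Derive, FCn. }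
  assert (E1 : forall t, 0 < t < 2 * L -> Derive F t = qB + (lam - 2) * (t - L)).
  { intros t Ht.
    pose proof (eq_deriv_open (Derive F) (fun u => (lam - 2) * u) (fun _ => lam - 2) 0 (2 * L) D2) as K.
    assert (Derive F t - Derive F L = (lam - 2) * t - (lam - 2) * L).
    { apply K; auto. intros u Hu. auto_derive; [exact I|ring]. }
    unfold qB; lra. }
  pose proof (eq_deriv_open F (fun u => qB * (u - L) + qC * (u - L) ^ 2) (Derive F) 0 (2 * L) D1) as K.
  assert (F s - F L = (qB * (s - L) + qC * (s - L) ^ 2) - (qB * (L - L) + qC * (L - L) ^ 2)).
  { apply K; auto. intros u Hu. rewrite E1 by auto. auto_derive; auto. unfold qC. field. }
  unfold qA; lra.
Qed.
Lemma Cx t : 0 <= t <= 2 * L -> continuity_pt x t.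
Proof. intros; apply (ID_cont _ _ _ (Dx t (I_in t H))). Qed.
Lemma Cy t : 0 <= t <= 2 * L -> continuity_pt y t.
Proof. intros; apply (ID_cont _ _ _ (Dy t (I_in t H))). Qed.
Lemma CDx t : 0 <= t <= 2 * L -> continuity_pt (Derive x) t.
Proof. intros; apply (ID_cont _ _ _ (DDx t (I_in t H))). Qed.
Lemma CDy t : 0 <= t <= 2 * L -> continuity_pt (Derive y) t.
Proof. intros; apply (ID_cont _ _ _ (DDy t (I_in t H))). Qed.
Lemma CDDx t : 0 <= t <= 2 * L -> continuity_pt (Derive (Derive x)) t.
Proof. intros; apply (ID_cont _ _ _ (DDDx t (I_in t H))). Qed.
Lemma CDDy t : 0 <= t <= 2 * L -> continuity_pt (Derive (Derive y)) t.
Proof. intros; apply (ID_cont _ _ _ (DDDy t (I_in t H))). Qed.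

Lemma sym_xy s : 0 <= s <= 2 * L -> x (2 * L - s) = - x s /\ y (2 * L - s) = y s.
Proof.
  intros Hs. destruct (phi_ex x y L Hsym) as [phi Hphi].
  apply (sym_result x y (Derive x) (Derive y) L x0 hL Cx Cy) with (phi := phi); auto.
  - intros t Ht; apply Dx, I_in; lra.
  - intros t Ht; apply Dy, I_in; lra.
  - intros t Ht; apply Harc'; lra.
Qed.

Lemma refl_der (f g : R -> R) c t a b : 0 < t < 2 * L ->
  (forall u, 0 < u < 2 * L -> f (2 * L - u) = c * g u) ->
  is_derive f (2 * L - t) a -> is_derive g t b -> - a = c * b.
Proof.
  intros Ht E Hf Hg.
  assert (H1 : is_derive (fun u => f (2 * L - u)) t (a * (-1))).
  { apply ID_comp; auto. auto_derive; [exact I|ring]. }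
  assert (H2 : is_derive (fun u => c * g u) t (0 * g t + c * b)).
  { apply ID_mult; [apply ID_const|exact Hg]. }
  apply is_derive_ext_loc with (g := fun u => c * g u) in H1.
  - apply is_derive_unique in H1. apply is_derive_unique in H2.
    assert (E' : a * -1 = 0 * g t + c * b) by (rewrite <- H1; exact H2). lra.
  - apply (filter_imp U0); [|apply open_U0; exact Ht]. intros u Hu. apply E; exact Hu.
Qed.

Lemma dsym1 t : 0 < t < 2 * L ->
  Derive x (2 * L - t) = Derive x t /\ Derive y (2 * L - t) = - Derive y t.
Proof.
  intros Ht. split.
  - assert (- Derive x (2 * L - t) = -1 * Derive x t); [|lra].
    apply (refl_der x x (-1) t); auto.
    + intros u Hu. rewrite (proj1 (sym_xy u ltac:(lra))). ring.
    + apply Dx, I_in; lra.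
    + apply Dx, I_in; lra.
  - assert (- Derive y (2 * L - t) = 1 * Derive y t); [|lra].
    apply (refl_der y y 1 t); auto.
    + intros u Hu. rewrite (proj2 (sym_xy u ltac:(lra))). ring.
    + apply Dy, I_in; lra.
    + apply Dy, I_in; lra.
Qed.

Lemma dsym2 t : 0 < t < 2 * L ->
  Derive (Derive x) (2 * L - t) = - Derive (Derive x) t /\
  Derive (Derive y) (2 * L - t) = Derive (Derive y) t.
Proof.
  intros Ht. split.
  - assert (- Derive (Derive x) (2 * L - t) = 1 * Derive (Derive x) t); [|lra].
    apply (refl_der (Derive x) (Derive x) 1 t); auto.
    + intros u Hu. rewrite (proj1 (dsym1 u Hu)). ring.
    + apply DDx, I_in; lra.
    + apply DDx, I_in; lra.
  - assert (- Derive (Derive y) (2 * L - t) = -1 * Derive (Derive y) t); [|lra].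
    apply (refl_der (Derive y) (Derive y) (-1) t); auto.
    + intros u Hu. rewrite (proj2 (dsym1 u Hu)). ring.
    + apply DDy, I_in; lra.
    + apply DDy, I_in; lra.
Qed.

Lemma N_sym t : 0 < t < 2 * L -> N (2 * L - t) = N t.
Proof.
  intros Ht. unfold N. destruct (dsym1 t Ht) as [A B]. destruct (dsym2 t Ht) as [C D].
  rewrite A, B, C, D. ring.
Qed.

Lemma qB0 : qB = 0.
Proof.
  assert (H1 : F (2 * L - L / 2) = F (L / 2)) by (unfold F; rewrite N_sym; auto; lra).
  rewrite !F_quad in H1 by lra.
  replace (2 * L - L / 2 - L) with (L / 2) in H1 by field.
  replace (L / 2 - L) with (- (L / 2)) in H1 by field.
  assert (qB * L = 0) by nra.
  apply Rmult_integral in H. destruct H; lra.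
Qed.

Lemma F_quad0 s : 0 < s < 2 * L -> F s = qA + qC * (s - L) ^ 2.
Proof. intros; rewrite F_quad, qB0 by auto; ring. Qed.

Lemma CN t : 0 <= t <= 2 * L -> continuity_pt N t.
Proof.
  intros Ht. unfold N. apply CP_minus; apply CP_mult;
  first [apply CDx | apply CDy | apply CDDx | apply CDDy]; auto.
Qed.

Lemma qApos : 0 < qA.
Proof.
  unfold qA, F. pose proof (Npos L ltac:(lra)).
  apply Rinv_0_lt_compat. apply pow_lt; auto.
Qed.

Lemma qend : 0 < qA + qC * L ^ 2.
Proof.
  assert (E : (fun s => N s ^ 2 * (qA + qC * (s - L) ^ 2)) 0 = 1).
  { apply (cont_right_val (fun s => N s ^ 2 * (qA + qC * (s - L) ^ 2)) 0 (2 * L) 1); [lra| |].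
    - apply CP_mult. apply (CP_comp (fun u => u ^ 2) N). apply CN; lra.
      apply derivable_continuous_pt, derivable_pt_pow.
      apply CP_plus; [apply CP_const|]. apply CP_mult; [apply CP_const|].
      apply (CP_comp (fun u => u ^ 2) (fun s => s - L)). apply CP_minus; [apply CP_id|apply CP_const].
      apply derivable_continuous_pt, derivable_pt_pow.
    - intros s Hs. cbv beta. rewrite <- F_quad0 by auto. unfold F.
      pose proof (Npos s ltac:(lra)). field. lra. }
  cbv beta in E. pose proof (Npos 0 ltac:(lra)).
  replace ((0 - L) ^ 2) with (L ^ 2) in E by ring.
  assert (0 < N 0 * (N 0 * 1)) by nra. nra.
Qed.

Section Theta.
Variable Th : R -> R.
Hypothesis HTc : forall s, 0 <= s <= 2 * L -> continuity_pt Th s.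
Hypothesis HT0 : Th 0 = 0.
Hypothesis HTd : forall s, 0 < s < 2 * L -> is_derive Th s (N s).

Lemma th_rep s : 0 <= s <= 2 * L ->
  Derive x s = Derive x 0 * cos (Th s) /\ Derive y s = Derive x 0 * sin (Th s).
Proof.
  intros Hs.
  set (u := fun t => Derive x t * cos (Th t) + Derive y t * sin (Th t)).
  set (v := fun t => - Derive x t * sin (Th t) + Derive y t * cos (Th t)).
  assert (Hu : u s = u 0).
  { apply (const_closed u 0 (2 * L)); auto; [lra| |].
    - intros t Ht. unfold u.
      pose proof (ID_plus _ _ t _ _
        (ID_mult _ _ t _ _ (DDx t (I_in t ltac:(lra))) (ID_comp cos Th t _ _ (HTd t Ht) (ID_R _ _ _ (derivable_pt_lim_cos _))))
        (ID_mult _ _ t _ _ (DDy t (I_in t ltac:(lra))) (ID_comp sin Th t _ _ (HTd t Ht) (ID_R _ _ _ (derivable_pt_lim_sin _))))) as D.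
      eapply ID_ext; [| |exact D]; [intros; reflexivity|].
      rewrite odex, odey by auto. ring.
    - intros t Ht. unfold u. apply CP_plus; apply CP_mult;
        try (apply CDx; auto); try (apply CDy; auto);
        apply CP_comp; auto; first [apply CP_cos | apply CP_sin]. }
  assert (Hv : v s = v 0).
  { apply (const_closed v 0 (2 * L)); auto; [lra| |].
    - intros t Ht. unfold v.
      pose proof (ID_plus _ _ t _ _
        (ID_mult _ _ t _ _ (ID_R _ _ _ (derivable_pt_lim_opp _ _ _ (proj1 (is_derive_Reals _ _ _) (DDx t (I_in t ltac:(lra))))))
            (ID_comp sin Th t _ _ (HTd t Ht) (ID_R _ _ _ (derivable_pt_lim_sin _))))
        (ID_mult _ _ t _ _ (DDy t (I_in t ltac:(lra))) (ID_comp cos Th t _ _ (HTd t Ht) (ID_R _ _ _ (derivable_pt_lim_cos _))))) as D.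
      eapply ID_ext; [| |exact D]; [intros; reflexivity|].
      unfold opp_fct. rewrite odex, odey by auto. ring.
    - intros t Ht. unfold v. apply CP_plus; apply CP_mult;
        try (apply (continuity_pt_opp (Derive x)); apply CDx; auto); try (apply CDy; auto);
        apply CP_comp; auto; first [apply CP_cos | apply CP_sin]. }
  unfold u, v in Hu, Hv. rewrite HT0, cos_0, sin_0, Hdy0 in Hu, Hv.
  pose proof (sin2_cos2' (Th s)).
  split.
  - transitivity ((Derive x s * cos (Th s) + Derive y s * sin (Th s)) * cos (Th s)
       - (- Derive x s * sin (Th s) + Derive y s * cos (Th s)) * sin (Th s)).
    + transitivity (Derive x s * (sin (Th s) * sin (Th s) + cos (Th s) * cos (Th s))); [rewrite H; ring|ring].
    + rewrite Hu, Hv. ring.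
  - transitivity ((Derive x s * cos (Th s) + Derive y s * sin (Th s)) * sin (Th s)
       + (- Derive x s * sin (Th s) + Derive y s * cos (Th s)) * cos (Th s)).
    + transitivity (Derive y s * (sin (Th s) * sin (Th s) + cos (Th s) * cos (Th s))); [rewrite H; ring|ring].
    + rewrite Hu, Hv. ring.
Qed.
Lemma th_incr s t : 0 <= s -> s < t -> t <= 2 * L -> Th s < Th t.
Proof.
  intros. apply (incr_closed Th N 0 (2 * L)); auto.
  intros u Hu; apply Npos; lra.
Qed.

Lemma Th_cont_ball u0 : 0 <= u0 <= 2 * L -> exists d, 0 < d /\
  forall u, Rabs (u - u0) < d -> Rabs (Th u - Th u0) < PI.
Proof.
  intros Hu. pose proof (HTc u0 Hu) as C. rewrite continuity_pt_locally in C.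
  destruct (C (mkposreal PI PI_RGT_0)) as [d Hd]. exists d. split; [apply cond_pos|].
  intros u H. apply (Hd u H).
Qed.

Lemma eps1 : Derive x 0 = 1.
Proof.
  pose proof (Harc' 0 ltac:(lra)) as H. rewrite Hdy0 in H.
  destruct (Req_dec (Derive x 0) 1) as [|Hne]; auto. exfalso.
  assert (Hm : Derive x 0 = -1) by nra.
  destruct (Th_cont_ball 0 ltac:(lra)) as [d [Hd Hc]].
  set (s1 := Rmin (d / 2) L).
  assert (Hs1 : 0 < s1 <= L) by (unfold s1, Rmin; destruct Rle_dec; lra).
  assert (Hs1d : s1 < d) by (unfold s1, Rmin; destruct Rle_dec; lra).
  destruct (MVT_open y (Derive y) 0 s1) as [c [Hc1 E]]; [lra| | |].
  - intros t Ht; apply Dy, I_in; lra.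
  - intros t Ht; apply Cy; lra.
  - rewrite (proj2 (th_rep c ltac:(lra))), Hm, Hy0 in E.
    assert (T1 : 0 < Th c) by (rewrite <- HT0; apply th_incr; lra).
    assert (T2 : Th c < PI).
    { specialize (Hc c ltac:(rewrite Rminus_0_r, Rabs_right; lra)). rewrite HT0, Rminus_0_r in Hc.
      apply Rabs_def2 in Hc; lra. }
    pose proof (sin_gt_0 _ T1 T2). pose proof (Hypos s1 ltac:(lra)). nra.
Qed.

Lemma th_xy s : 0 <= s <= 2 * L -> Derive x s = cos (Th s) /\ Derive y s = sin (Th s).
Proof. intros Hs. rewrite (proj1 (th_rep s Hs)), (proj2 (th_rep s Hs)), eps1. split; ring. Qed.

Lemma th_end : cos (Th (2 * L)) = 1 /\ sin (Th (2 * L)) = 0.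
Proof.
  assert (Hs : sin (Th (2 * L)) = 0) by (rewrite <- (proj2 (th_xy (2 * L) ltac:(lra))); auto).
  split; auto.
  pose proof (sin2_cos2' (Th (2 * L))) as Hsc. rewrite Hs in Hsc.
  destruct (Req_dec (cos (Th (2 * L))) 1) as [|Hne]; auto. exfalso.
  assert (Hm : cos (Th (2 * L)) = -1) by nra.
  destruct (Th_cont_ball (2 * L) ltac:(lra)) as [d [Hd Hc]].
  set (s1 := 2 * L - Rmin (d / 2) L).
  assert (Hs1 : L <= s1 < 2 * L) by (unfold s1, Rmin; destruct Rle_dec; lra).
  assert (Hs1d : 2 * L - s1 < d) by (unfold s1, Rmin; destruct Rle_dec; lra).
  destruct (MVT_open y (Derive y) s1 (2 * L)) as [c [Hc1 E]]; [lra| | |].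
  - intros t Ht; apply Dy, I_in; lra.
  - intros t Ht; apply Cy; lra.
  - rewrite (proj2 (th_xy c ltac:(lra))), Hy2 in E.
    assert (T1 : Th c < Th (2 * L)) by (apply th_incr; lra).
    assert (T2 : Th (2 * L) - Th c < PI).
    { specialize (Hc c ltac:(rewrite Rabs_left; lra)).
      rewrite Rabs_left in Hc by lra. lra. }
    replace (Th c) with (Th (2 * L) - (Th (2 * L) - Th c)) in E by ring.
    rewrite sin_minus, Hs, Hm in E.
    pose proof (sin_gt_0 (Th (2 * L) - Th c) ltac:(lra) T2).
    pose proof (Hypos s1 ltac:(lra)). nra.
Qed.

Lemma x_closure (G : R -> R) : (forall t, 0 < t < 2 * L -> is_derive G t (cos (Th t))) ->
  (forall t, 0 <= t <= 2 * L -> continuity_pt G t) ->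
  forall s, 0 <= s <= 2 * L -> x s - x 0 = G s - G 0.
Proof.
  intros HG CG s Hs. apply (eq_deriv_closed x G (fun t => cos (Th t)) 0 (2 * L)); auto; [lra| |].
  - intros t Ht. rewrite <- (proj1 (th_xy t ltac:(lra))). apply Dx, I_in; lra.
  - apply Cx.
Qed.

Lemma y_closure (G : R -> R) : (forall t, 0 < t < 2 * L -> is_derive G t (sin (Th t))) ->
  (forall t, 0 <= t <= 2 * L -> continuity_pt G t) ->
  forall s, 0 <= s <= 2 * L -> y s - y 0 = G s - G 0.
Proof.
  intros HG CG s Hs. apply (eq_deriv_closed y G (fun t => sin (Th t)) 0 (2 * L)); auto; [lra| |].
  - intros t Ht. rewrite <- (proj2 (th_xy t ltac:(lra))). apply Dy, I_in; lra.
  - apply Cy.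
Qed.
End Theta.
Lemma N_from_sq s D : 0 < s < 2 * L -> 0 < D -> D * D * F s = 1 -> N s = D.
Proof.
  intros Hs HD E. pose proof (Npos s ltac:(lra)) as HN. unfold F in E.
  assert (E2 : D * D = N s * N s).
  { apply (Rmult_eq_reg_r (/ N s ^ 2)). rewrite E. simpl. field. lra.
    apply Rgt_not_eq, Rinv_0_lt_compat, pow_lt; lra. }
  nra.
Qed.

Lemma case_C0 : qC = 0 -> False.
Proof.
  intros HC. pose proof qApos as HA.
  set (r := sqrt qA). assert (Hr : 0 < r) by (apply sqrt_lt_R0; auto).
  assert (Hr2 : r * r = qA) by (apply sqrt_sqrt; lra).
  set (Th := fun s => s / r).
  assert (HTd : forall s, 0 < s < 2 * L -> is_derive Th s (N s)).
  { intros s Hs. rewrite (N_from_sq s (/ r)); auto.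
    - unfold Th. auto_derive; [exact I|field; lra].
    - apply Rinv_0_lt_compat; auto.
    - rewrite F_quad0, HC by auto. rewrite <- Hr2. field. lra. }
  assert (HTc : forall s, 0 <= s <= 2 * L -> continuity_pt Th s).
  { intros s Hs. apply (ID_cont _ _ (/ r)). unfold Th. auto_derive; [exact I|field; lra]. }
  assert (HT0 : Th 0 = 0) by (unfold Th; unfold Rdiv; ring).
  set (G := fun s => r * sin (s / r)).
  assert (HG : forall t, is_derive G t (cos (Th t))).
  { intros t. unfold G, Th. auto_derive; [exact I|unfold Rdiv; field; lra]. }
  pose proof (x_closure Th HTc HT0 HTd G (fun t _ => HG t) (fun t _ => ID_cont _ _ _ (HG t)) (2 * L) ltac:(lra)) as E.
  pose proof (th_end Th HTc HT0 HTd) as [_ Hs].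
  unfold G in E. unfold Th in Hs. rewrite Hs, Hx0, Hx2 in E.
  replace (0 / r) with 0 in E by (unfold Rdiv; ring). rewrite sin_0 in E. lra.
Qed.

Lemma case_Cpos : 0 < qC -> False.
Proof.
  intros HC. pose proof qApos as HA.
  set (w := / sqrt qC). set (k := sqrt (qA / qC)).
  assert (Hw : 0 < w) by (apply Rinv_0_lt_compat, sqrt_lt_R0; auto).
  assert (Hk : 0 < k) by (apply sqrt_lt_R0; apply Rdiv_lt_0_compat; auto).
  assert (Hw2 : w * w = / qC).
  { unfold w. rewrite <- Rinv_mult. rewrite sqrt_sqrt; lra. }
  assert (Hk2 : k * k = qA / qC) by (apply sqrt_sqrt; apply Rlt_le, Rdiv_lt_0_compat; auto).
  set (bb := - (w * arcsinh ((0 - L) / k))).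
  set (Th := fun s => w * arcsinh ((s - L) / k) + bb).
  assert (HTd' : forall s, is_derive Th s (w * (/ k * / sqrt (((s - L)/k) ^ 2 + 1)))).
  { intros s. apply is_derive_Thh; auto. }
  assert (HTd : forall s, 0 < s < 2 * L -> is_derive Th s (N s)).
  { intros s Hs. rewrite (N_from_sq s (w * (/ k * / sqrt (((s - L)/k) ^ 2 + 1)))); auto.
    - pose proof (sqrt_z2p1_pos ((s - L) / k)).
      apply Rmult_lt_0_compat; auto. apply Rmult_lt_0_compat; apply Rinv_0_lt_compat; auto.
    - rewrite F_quad0 by auto.
      pose proof (sqrt_z2p1_pos ((s - L) / k)) as Hq.
      assert (Hq2 : sqrt (((s - L) / k) ^ 2 + 1) * sqrt (((s - L) / k) ^ 2 + 1) = ((s - L) / k) ^ 2 + 1)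
        by (apply sqrt_sqrt; pose proof (pow2_ge_0 ((s - L) / k)); lra).
      set (q := sqrt (((s - L) / k) ^ 2 + 1)) in *.
      replace (w * (/ k * / q) * (w * (/ k * / q)) * (qA + qC * (s - L) ^ 2))
        with ((w * w) * (qA + qC * (s - L) ^ 2) / ((k * k) * (q * q))) by (field; lra).
      rewrite Hw2, Hk2, Hq2.
      replace (((s - L) / k) ^ 2) with ((s - L) ^ 2 / (k * k)) by (field; lra).
      rewrite Hk2. pose proof (pow2_ge_0 (s - L)).
      field. repeat split; try lra. nra. }
  assert (HTc : forall s, 0 <= s <= 2 * L -> continuity_pt Th s).
  { intros s Hs. apply (ID_cont _ _ _ (HTd' s)). }
  assert (HT0 : Th 0 = 0) by (unfold Th, bb; ring).
  set (G := Hx k w bb L).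
  assert (HG : forall t, is_derive G t (cos (Th t))).
  { intros t. apply is_derive_Hx; auto. }
  pose proof (x_closure Th HTc HT0 HTd G (fun t _ => HG t) (fun t _ => ID_cont _ _ _ (HG t)) (2 * L) ltac:(lra)) as E.
  pose proof (th_end Th HTc HT0 HTd) as [Hc Hs].
  unfold G, Hx in E. unfold Th in Hc, Hs, HT0. rewrite Hc, Hs, HT0, cos_0, sin_0, Hx0, Hx2 in E.
  replace ((2 * L - L) / k) with (L / k) in E by (field; lra).
  replace ((0 - L) / k) with (- (L / k)) in E by (field; lra).
  assert (Hw1 : 0 < 1 + w ^ 2) by nra.
  assert (E2 : - x0 - x0 = 2 * L / (1 + w ^ 2)) by (rewrite E; field; lra).
  assert (0 < 2 * L / (1 + w ^ 2)) by (apply Rdiv_lt_0_compat; nra).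
  lra.
Qed.
Section Cneg.
Hypothesis HC : qC < 0.
Let w := / sqrt (- qC).
Let k := sqrt (qA / - qC).
Lemma Hw : 0 < w.
Proof. apply Rinv_0_lt_compat, sqrt_lt_R0; lra. Qed.
Lemma Hk : 0 < k.
Proof. apply sqrt_lt_R0; apply Rdiv_lt_0_compat; [apply qApos|lra]. Qed.
Lemma Hw2 : w * w = / - qC.
Proof. unfold w. rewrite <- Rinv_mult. rewrite sqrt_sqrt; lra. Qed.
Lemma Hk2 : k * k = qA / - qC.
Proof. apply sqrt_sqrt; apply Rlt_le, Rdiv_lt_0_compat; [apply qApos|lra]. Qed.
Lemma Hw1 : 1 < w.
Proof.
  pose proof Hw; pose proof Hw2. unfold qC in *.
  assert (1 < w * w). { rewrite H0. rewrite <- Rinv_1. apply Rinv_lt_contravar; lra. }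
  nra.
Qed.
Lemma HkL : L < k.
Proof.
  pose proof Hk; pose proof Hk2; pose proof qend.
  assert (L * L < k * k). { rewrite H0. apply (Rmult_lt_reg_r (- qC)); [lra|]. field_simplify; nra. }
  nra.
Qed.
Lemma Hz s : 0 <= s <= 2 * L -> -1 < (s - L) / k < 1.
Proof.
  intros Hs. pose proof Hk; pose proof HkL.
  split; [apply (Rmult_lt_reg_r k)|apply (Rmult_lt_reg_r k)]; auto; field_simplify; lra.
Qed.

Let al := asin (L / k).
Let bb := - (w * aa k L 0).
Lemma aa0 : aa k L 0 = - al.
Proof. unfold aa, al. rewrite <- asin_opp. f_equal. field. pose proof Hk; lra. Qed.
Lemma aa2L : aa k L (2 * L) = al.
Proof. unfold aa, al. f_equal. field. pose proof Hk; lra. Qed.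
Lemma bbE : bb = w * al.
Proof. unfold bb; rewrite aa0; ring. Qed.
Lemma sal : sin al = L / k.
Proof. unfold al; apply sin_asin. pose proof Hk; pose proof HkL. split; apply (Rmult_le_reg_r k); auto; field_simplify; lra. Qed.
Lemma ksal : k * sin al = L.
Proof. rewrite sal. field. pose proof Hk; lra. Qed.
Lemma al_bound : 0 < al < PI / 2.
Proof.
  pose proof Hk; pose proof HkL.
  assert (Hb : -1 < L / k < 1) by (split; apply (Rmult_lt_reg_r k); auto; field_simplify; lra).
  pose proof (asin_bound_lt _ Hb). fold al in H1. split; [|lra].
  destruct (Rle_lt_dec al 0) as [Hn|]; auto. exfalso.
  pose proof (sin_ge_0 (- al) ltac:(lra) ltac:(lra)). rewrite sin_neg, sal in H2.
  assert (0 < L / k) by (apply Rdiv_lt_0_compat; lra). lra.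
Qed.

Definition Thn s := w * aa k L s + bb.

Lemma Thn_der s : 0 <= s <= 2 * L -> is_derive Thn s (w * (/ k * / sqrt (1 - (s - L)/k * ((s - L)/k)))).
Proof. intros Hs. apply is_derive_Tha. apply Hk. apply Hz; auto. Qed.

Lemma Thn_N s : 0 < s < 2 * L -> is_derive Thn s (N s).
Proof.
  intros Hs. pose proof (Hz s ltac:(lra)) as Hzs. pose proof Hk as Hk'. pose proof Hw as Hw'.
  pose proof (sqrt_1mz_pos _ Hzs) as Hq.
  rewrite (N_from_sq s (w * (/ k * / sqrt (1 - (s - L)/k * ((s - L)/k))))); auto.
  - apply Thn_der; lra.
  - apply Rmult_lt_0_compat; auto. apply Rmult_lt_0_compat; apply Rinv_0_lt_compat; auto.
  - rewrite F_quad0 by auto.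
    assert (Hq2 : sqrt (1 - (s - L)/k * ((s - L)/k)) * sqrt (1 - (s - L)/k * ((s - L)/k)) = 1 - (s - L)/k * ((s - L)/k))
      by (apply sqrt_sqrt; nra).
    set (q := sqrt (1 - (s - L)/k * ((s - L)/k))) in *.
    replace (w * (/ k * / q) * (w * (/ k * / q)) * (qA + qC * (s - L) ^ 2))
      with ((w * w) * (qA + qC * (s - L) ^ 2) / ((k * k) * (q * q))) by (field; lra).
    rewrite Hw2, Hq2.
    replace ((s - L) / k * ((s - L) / k)) with ((s - L) ^ 2 / (k * k)) by (field; lra).
    rewrite Hk2. pose proof (pow2_ge_0 (s - L)). pose proof qApos.
    field. repeat split; try lra.
    assert (HF : 0 < qA + qC * (s - L) ^ 2).
    { rewrite <- F_quad0 by auto. unfold F. apply Rinv_0_lt_compat, pow_lt, Npos; lra. }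
    lra.
Qed.
Lemma Thn_c s : 0 <= s <= 2 * L -> continuity_pt Thn s.
Proof. intros Hs; apply (ID_cont _ _ _ (Thn_der s Hs)). Qed.
Lemma Thn0 : Thn 0 = 0.
Proof. unfold Thn, bb; ring. Qed.

Lemma be_trig : sin (w * al) = 0 /\ cos (w * al) * cos (w * al) = 1.
Proof.
  destruct (th_end Thn Thn_c Thn0 Thn_N) as [Hc Hs].
  unfold Thn in Hc, Hs. rewrite aa2L, bbE in Hc, Hs.
  replace (w * al + w * al) with (2 * (w * al)) in Hc, Hs by ring.
  rewrite cos_2a_sin in Hc. assert (Hs0 : sin (w * al) = 0) by nra.
  split; auto. pose proof (sin2_cos2' (w * al)). rewrite Hs0 in H. lra.
Qed.

Lemma Gx_der t : 0 <= t <= 2 * L -> is_derive (Gx k w bb L) t (cos (Thn t)).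
Proof. intros Ht. apply is_derive_Gx; [apply Hk|apply Hw1|apply Hz; auto]. Qed.
Lemma Gy_der t : 0 <= t <= 2 * L -> is_derive (Gy k w bb L) t (sin (Thn t)).
Proof. intros Ht. apply is_derive_Gy; [apply Hk|apply Hw1|apply Hz; auto]. Qed.

Lemma xcl s : 0 <= s <= 2 * L -> x s - x 0 = Gx k w bb L s - Gx k w bb L 0.
Proof.
  apply (x_closure Thn Thn_c Thn0 Thn_N).
  - intros t Ht; apply Gx_der; lra.
  - intros t Ht; apply (ID_cont _ _ _ (Gx_der t Ht)).
Qed.
Lemma ycl s : 0 <= s <= 2 * L -> y s - y 0 = Gy k w bb L s - Gy k w bb L 0.
Proof.
  apply (y_closure Thn Thn_c Thn0 Thn_N).
  - intros t Ht; apply Gy_der; lra.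
  - intros t Ht; apply (ID_cont _ _ _ (Gy_der t Ht)).
Qed.

Lemma Gx0 : Gx k w bb L 0 = k / 2 * (- sin al / (w + 1) + sin al / (w - 1)).
Proof.
  unfold Gx. rewrite aa0, bbE.
  replace ((w + 1) * - al + w * al) with (- al) by ring.
  replace ((w - 1) * - al + w * al) with al by ring.
  rewrite sin_neg. reflexivity.
Qed.

Lemma w2 : x0 * (w * w - 1) = L.
Proof.
  pose proof (xcl (2 * L) ltac:(lra)) as E. rewrite Hx0, Hx2, Gx0 in E.
  destruct be_trig as [S C].
  unfold Gx in E. rewrite aa2L, bbE in E.
  replace ((w + 1) * al + w * al) with (w * al + (w * al + al)) in E by ring.
  replace ((w - 1) * al + w * al) with (w * al + (w * al - al)) in E by ring.
  rewrite !sin_plus, sin_minus, !cos_plus, !cos_minus, S in E.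
  pose proof Hw1. pose proof ksal. pose proof Hk.
  assert (E2 : - x0 - x0 = - 2 * (k * sin al) / ((w + 1) * (w - 1))).
  { assert (Cc : cos (w * al) = 1 \/ cos (w * al) = -1) by nra.
    destruct Cc as [Cc|Cc]; rewrite Cc in E; rewrite E; field; lra. }
  rewrite H0 in E2. apply (Rmult_eq_reg_r (/ ((w + 1) * (w - 1)))).
  2: { apply Rinv_neq_0_compat. nra. }
  replace (x0 * (w * w - 1) * / ((w + 1) * (w - 1))) with x0 by (field; lra).
  replace (L * / ((w + 1) * (w - 1))) with (2 * L / ((w + 1) * (w - 1)) / 2) by (field; lra).
  lra.
Qed.
Lemma Gy0 : Gy k w bb L 0 = - (k / 2) * (cos al / (w + 1) + cos al / (w - 1)).
Proof.
  unfold Gy. rewrite aa0, bbE.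
  replace ((w + 1) * - al + w * al) with (- al) by ring.
  replace ((w - 1) * - al + w * al) with al by ring.
  rewrite cos_neg. reflexivity.
Qed.

Lemma not_ge_2pi : w * al < 2 * PI.
Proof.
  destruct (Rlt_le_dec (w * al) (2 * PI)) as [|Hge]; auto. exfalso.
  pose proof Hw1 as Hw1'. pose proof Hk as Hk'. pose proof al_bound as Hal. pose proof PI_RGT_0.
  set (a1 := 2 * PI / w - al).
  assert (Ha1 : - al < a1 <= 0).
  { unfold a1. split.
    - assert (0 < 2 * PI / w) by (apply Rdiv_lt_0_compat; lra). lra.
    - assert (2 * PI / w <= al); [|lra].
      apply (Rmult_le_reg_r w); [lra|]. unfold Rdiv. rewrite Rmult_assoc, Rinv_l by lra. lra. }
  set (s1 := L + k * sin a1).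
  assert (Haa : aa k L s1 = a1).
  { unfold aa, s1. replace ((L + k * sin a1 - L) / k) with (sin a1) by (field; lra).
    apply asin_sin; lra. }
  assert (Hs1 : 0 < s1 <= L).
  { unfold s1. split.
    - pose proof (sin_increasing_1 (- al) a1 ltac:(lra) ltac:(lra) ltac:(lra) ltac:(lra) ltac:(lra)).
      rewrite sin_neg in H0. pose proof ksal. nra.
    - pose proof (sin_ge_0 (- a1) ltac:(lra) ltac:(lra)). rewrite sin_neg in H0. nra. }
  pose proof (ycl s1 ltac:(lra)) as E. rewrite Hy0, Gy0 in E.
  unfold Gy in E. rewrite Haa, bbE in E.
  assert (Hwa : w * a1 = 2 * PI - w * al) by (unfold a1; field; lra).
  replace ((w + 1) * a1 + w * al) with (2 * PI + a1) in E by lra.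
  replace ((w - 1) * a1 + w * al) with (2 * PI - a1) in E by lra.
  rewrite cos_plus, cos_minus, cos_2PI, sin_2PI in E.
  assert (Hc : cos al < cos a1).
  { rewrite <- (cos_neg a1). apply cos_decreasing_1; lra. }
  pose proof (Hypos s1 ltac:(lra)).
  assert (HP : 0 < 1 / (w + 1) + 1 / (w - 1)).
  { apply Rplus_lt_0_compat; apply Rdiv_lt_0_compat; lra. }
  assert (E2 : y s1 = k / 2 * (cos al - cos a1) * (1 / (w + 1) + 1 / (w - 1))).
  { replace (y s1) with (y s1 - 0) by ring. rewrite E. field. lra. }
  assert (HQ : 0 < k / 2 * (1 / (w + 1) + 1 / (w - 1))) by (apply Rmult_lt_0_compat; lra).
  assert (E3 : y s1 = (cos al - cos a1) * (k / 2 * (1 / (w + 1) + 1 / (w - 1)))) by (rewrite E2; ring).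
  nra.
Qed.

Lemma be_pi : w * al = PI.
Proof.
  pose proof Hw as Hw'. pose proof al_bound as Hal. pose proof PI_RGT_0.
  destruct be_trig as [S C]. pose proof not_ge_2pi.
  assert (Hb : 0 < w * al) by nra.
  destruct (Rtotal_order (w * al) PI) as [Hl|[He'|Hg]]; auto; exfalso.
  - pose proof (sin_gt_0 _ Hb Hl). lra.
  - pose proof (sin_gt_0 (w * al - PI) ltac:(lra) ltac:(lra)).
    rewrite sin_minus, S, sin_PI in H1. lra.
Qed.
Lemma sig_al : sigma_ x0 L = al.
Proof.
  pose proof Hw as Hw'. pose proof w2 as W. pose proof be_pi as B.
  unfold sigma_.
  assert (E : x0 / (L + x0) = / w * / w).
  { rewrite <- W. field. split; [lra|]. intro. nra. }
  rewrite E, sqrt_square by (apply Rlt_le, Rinv_0_lt_compat; lra).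
  apply (Rmult_eq_reg_r w); [|lra]. rewrite Rmult_assoc, Rinv_l by lra. lra.
Qed.

Lemma case_Cneg : 3 * x0 < L /\ lam = 2 * L / (L + x0) /\
  forall s, 0 <= s <= 2 * L -> x s = sol_x x0 L s /\ y s = sol_y x0 L s.
Proof.
  pose proof Hw as Hw'. pose proof Hw1 as Hw1'. pose proof w2 as W. pose proof be_pi as B.
  pose proof al_bound as Hal. pose proof Hk as Hk'. pose proof ksal as KS. pose proof sig_al as SA.
  pose proof PI_RGT_0.
  assert (Hsal : 0 < sin al) by (apply sin_gt_0; lra).
  assert (Hcal : 0 < cos al) by (apply cos_gt_0; lra).
  split; [|split].
  - assert (2 < w).
    { assert (al = PI / w) by (rewrite <- B; field; lra).
      assert (PI / w < PI / 2) by lra.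
      destruct (Rlt_le_dec 2 w) as [|Hle]; auto. exfalso.
      assert (PI / 2 <= PI / w); [|lra].
      apply Rmult_le_compat_l; [lra|]. apply Rinv_le_contravar; lra. }
    assert (4 < w * w) by nra. rewrite <- W. nra.
  - pose proof Hw2 as H2. unfold qC in H2. pose proof HC as HC'. unfold qC in HC'.
    assert (Hc : w * w * (- ((lam - 2) / 2)) = 1) by (rewrite H2; field; lra).
    replace (2 * L / (L + x0)) with (2 * (w * w - 1) / (w * w)).
    2: { rewrite <- W. field. split; [nra|lra]. }
    apply (Rmult_eq_reg_r (w * w)); [|nra].
    replace (2 * (w * w - 1) / (w * w) * (w * w)) with (2 * (w * w - 1)) by (field; nra).
    lra.
  - intros s Hs.
    assert (Hsg : 0 < sigma_ x0 L < PI) by (rewrite SA; lra).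
    destruct (sol_G x0 L s Hsg) as [SX SY].
    assert (Hkk : k_ x0 L = k).
    { unfold k_. rewrite SA, sal. field. lra. }
    assert (Hpw : PI / sigma_ x0 L = w) by (rewrite SA, <- B; field; lra).
    assert (Hbb : bb = PI) by (rewrite bbE; exact B).
    rewrite Hkk, Hpw, <- Hbb in SX, SY.
    split.
    + rewrite SX. pose proof (xcl s Hs). rewrite Gx0, Hx0 in H0.
      assert (k / 2 * (- sin al / (w + 1) + sin al / (w - 1)) = x0).
      { replace (k / 2 * (- sin al / (w + 1) + sin al / (w - 1))) with ((k * sin al) / ((w + 1) * (w - 1)))
          by (field; lra). rewrite KS, <- W. field. split; lra. }
      lra.
    + rewrite SY. pose proof (ycl s Hs). rewrite Gy0, Hy0 in H0.
      rewrite SA. unfold tan.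
      assert (- (- (k / 2) * (cos al / (w + 1) + cos al / (w - 1))) = bb * x0 / (al * (sin al / cos al))).
      { rewrite Hbb. replace PI with (w * al) by exact B.
        replace x0 with (k * sin al / (w * w - 1)) by (rewrite KS, <- W; field; nra).
        field. repeat split; try lra. nra. }
      lra.
Qed.
End Cneg.
Lemma uniq_main : 3 * x0 < L /\ lam = 2 * L / (L + x0) /\
  forall s, 0 <= s <= 2 * L -> x s = sol_x x0 L s /\ y s = sol_y x0 L s.
Proof.
  destruct (Rtotal_order qC 0) as [Hn|[H0|Hp]].
  - apply case_Cneg; auto.
  - exfalso; apply case_C0; auto.
  - exfalso; apply case_Cpos; auto.
Qed.
End Uniq.

Lemma uniq_from_sol x0 L lam x y : 0 < x0 -> 0 < L -> is_solution x0 L lam x y ->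
  3 * x0 < L /\ lam = 2 * L / (L + x0) /\
  forall s, 0 <= s <= 2 * L -> x s = sol_x x0 L s /\ y s = sol_y x0 L s.
Proof.
  intros hx0 hL [Hlam [[[ex [Hex Hxs]] [[ey [Hey Hys]] [_ [Hcurv [Hinj [Hx0 [Hy0 [Hx2 [Hy2 Hypos]]]]]]]]] [Hsym [Harc [Hdy0 [Hdy2 Hode]]]]]].
  set (e := Rmin ex ey).
  assert (He : 0 < e) by (unfold e, Rmin; destruct Rle_dec; lra).
  apply (uniq_main x0 L lam e x y); auto.
  - intros n t Ht. apply Hxs. unfold e, Rmin in Ht; destruct Rle_dec; lra.
  - intros n t Ht. apply Hys. unfold e, Rmin in Ht; destruct Rle_dec; lra.
Qed.

Section Exist.
Variables x0 L : R.
Hypothesis hx0 : 0 < x0.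
Hypothesis hL : 0 < L.
Hypothesis h3 : 3 * x0 < L.

Let sg := sigma_ x0 L.
Let k := k_ x0 L.
Let w := PI / sg.

Lemma sg_bound : 0 < sg < PI / 2.
Proof.
  unfold sg, sigma_. pose proof PI_RGT_0.
  assert (H1 : 0 < x0 / (L + x0)) by (apply Rdiv_lt_0_compat; lra).
  assert (H2 : x0 / (L + x0) < / 4) by (apply (Rmult_lt_reg_r (L + x0)); [lra|]; field_simplify; lra).
  assert (H3 : 0 < sqrt (x0 / (L + x0))) by (apply sqrt_lt_R0; auto).
  assert (H4 : sqrt (x0 / (L + x0)) < / 2).
  { replace (/ 2) with (sqrt (/ 4)). apply sqrt_lt_1_alt; lra.
    replace (/ 4) with (/ 2 * / 2) by field. apply sqrt_square; lra. }
  split; nra.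
Qed.

Lemma sg2 : sg * sg = PI * PI * (x0 / (L + x0)).
Proof.
  unfold sg, sigma_.
  assert (0 <= x0 / (L + x0)) by (apply Rlt_le, Rdiv_lt_0_compat; lra).
  replace (PI * sqrt (x0 / (L + x0)) * (PI * sqrt (x0 / (L + x0)))) with
    (PI * PI * (sqrt (x0 / (L + x0)) * sqrt (x0 / (L + x0)))) by ring.
  rewrite sqrt_sqrt; auto.
Qed.

Lemma sin_sg : 0 < sin sg < 1.
Proof.
  pose proof sg_bound. pose proof PI_RGT_0. split.
  - apply sin_gt_0; lra.
  - rewrite <- sin_PI2. apply sin_increasing_1; lra.
Qed.

Lemma k_pos : L < k.
Proof.
  unfold k, k_. fold sg. pose proof sin_sg.
  apply (Rmult_lt_reg_r (sin sg)); [lra|]. field_simplify; nra.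
Qed.

Lemma w_gt2 : 2 < w.
Proof.
  pose proof sg_bound. pose proof PI_RGT_0. unfold w.
  apply (Rmult_lt_reg_r sg); [lra|]. field_simplify; lra.
Qed.

Lemma wsg : w * sg = PI.
Proof. pose proof sg_bound. unfold w. field. lra. Qed.

Lemma w2m1 : x0 * (w * w - 1) = L.
Proof.
  pose proof sg_bound. pose proof sg2. pose proof PI_RGT_0. unfold w.
  replace (PI / sg * (PI / sg)) with (PI * PI / (sg * sg)) by (field; lra).
  rewrite H0. field; repeat split; lra.
Qed.

Lemma ksg : k * sin sg = L.
Proof. unfold k, k_. fold sg. pose proof sin_sg. field. lra. Qed.

Definition Ik t := L - k < t < L + k.
Lemma open_Ik : open Ik.
Proof. apply open_and; [apply open_gt|apply open_lt]. Qed.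
Lemma Ik_z t : Ik t -> -1 < (t - L) / k < 1.
Proof.
  intros H. unfold Ik in H. pose proof k_pos.
  split; apply (Rmult_lt_reg_r k); try lra; field_simplify; lra.
Qed.

Lemma sol_eq s : sol_x x0 L s = Gx k w PI L s /\
  sol_y x0 L s = Gy k w PI L s + PI * x0 / (sg * tan sg).
Proof. apply sol_G. pose proof sg_bound. pose proof PI_RGT_0. fold sg. lra. Qed.

Lemma aa_Cn n : Cn Ik n (aa k L).
Proof.
  unfold aa. apply (Cn_comp Ik Uball n asin (fun t => (t - L) / k)).
  - apply open_Ik. - apply open_Uball. - intros t Ht; apply Ik_z; auto.
  - apply Cn_asin.
  - apply Cn_ext with (fun t => / k * (t - L)). { intros; unfold Rdiv; ring. }
    apply Cn_scal; [apply open_Ik|]. apply Cn_minus; [apply open_Ik|apply Cn_id, open_Ik|apply Cn_const, open_Ik].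
Qed.

Lemma trig_Cn n c (f : R -> R) : (f = sin \/ f = cos) ->
  Cn Ik n (fun t => f (c * aa k L t + PI)).
Proof.
  intros Hf. apply (Cn_comp Ik (fun _ => True) n f (fun t => c * aa k L t + PI)).
  - apply open_Ik. - apply open_true. - auto.
  - destruct Hf; subst; apply Cn_sincos.
  - apply Cn_plus; [apply open_Ik| |apply Cn_const, open_Ik].
    apply Cn_scal; [apply open_Ik|apply aa_Cn].
Qed.

Lemma solx_Cn n : Cn Ik n (sol_x x0 L).
Proof.
  apply Cn_ext with (Gx k w PI L). { intros; symmetry; apply sol_eq. }
  apply Cn_ext with (fun t => (k / 2 / (w + 1)) * sin ((w + 1) * aa k L t + PI)
                            + (k / 2 / (w - 1)) * sin ((w - 1) * aa k L t + PI)).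
  { intros t. unfold Gx. pose proof w_gt2. field. lra. }
  apply Cn_plus; [apply open_Ik| |]; apply Cn_scal; try apply open_Ik; apply trig_Cn; auto.
Qed.

Lemma soly_Cn n : Cn Ik n (sol_y x0 L).
Proof.
  apply Cn_ext with (fun t => Gy k w PI L t + PI * x0 / (sg * tan sg)). { intros; symmetry; apply sol_eq. }
  apply Cn_plus; [apply open_Ik| |apply Cn_const, open_Ik].
  apply Cn_ext with (fun t => (- (k / 2) / (w + 1)) * cos ((w + 1) * aa k L t + PI)
                            + (- (k / 2) / (w - 1)) * cos ((w - 1) * aa k L t + PI)).
  { intros t. unfold Gy. pose proof w_gt2. field. lra. }
  apply Cn_plus; [apply open_Ik| |]; apply Cn_scal; try apply open_Ik; apply trig_Cn; auto.
Qed.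
Definition Thx t := w * aa k L t + PI.
Definition Dth t := w * (/ k * / sqrt (1 - (t - L) / k * ((t - L) / k))).

Lemma Dth_pos t : Ik t -> 0 < Dth t.
Proof.
  intros H. pose proof (sqrt_1mz_pos _ (Ik_z t H)). pose proof w_gt2. pose proof k_pos.
  unfold Dth. apply Rmult_lt_0_compat; [lra|]. apply Rmult_lt_0_compat; apply Rinv_0_lt_compat; lra.
Qed.

Lemma Thx_der t : Ik t -> is_derive Thx t (Dth t).
Proof. intros H. apply is_derive_Tha. pose proof k_pos; lra. apply Ik_z; auto. Qed.

Lemma Dsolx t : Ik t -> is_derive (sol_x x0 L) t (cos (Thx t)).
Proof.
  intros H. apply (ID_ext (Gx k w PI L) _ t (cos (Thx t))).
  intros u; symmetry; apply (proj1 (sol_eq u)). reflexivity.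
  apply is_derive_Gx. pose proof k_pos; lra. pose proof w_gt2; lra. apply Ik_z; auto.
Qed.

Lemma Dsoly t : Ik t -> is_derive (sol_y x0 L) t (sin (Thx t)).
Proof.
  intros H. apply (ID_ext (fun u => Gy k w PI L u + PI * x0 / (sg * tan sg)) _ t (sin (Thx t) + 0)).
  intros u; symmetry; apply (proj2 (sol_eq u)). ring.
  apply ID_plus; [|apply ID_const].
  apply is_derive_Gy. pose proof k_pos; lra. pose proof w_gt2; lra. apply Ik_z; auto.
Qed.

Lemma Derx t : Ik t -> Derive (sol_x x0 L) t = cos (Thx t).
Proof. intros; apply is_derive_unique, Dsolx; auto. Qed.
Lemma Dery t : Ik t -> Derive (sol_y x0 L) t = sin (Thx t).
Proof. intros; apply is_derive_unique, Dsoly; auto. Qed.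

Lemma DDerx t : Ik t -> Derive (Derive (sol_x x0 L)) t = - sin (Thx t) * Dth t.
Proof.
  intros H. rewrite (Derive_ext_loc _ (fun u => cos (Thx u))).
  - apply is_derive_unique. apply (ID_comp cos Thx t). apply Thx_der; auto.
    apply ID_R, derivable_pt_lim_cos.
  - apply (filter_imp Ik); [|apply open_Ik; auto]. intros; apply Derx; auto.
Qed.

Lemma DDery t : Ik t -> Derive (Derive (sol_y x0 L)) t = cos (Thx t) * Dth t.
Proof.
  intros H. rewrite (Derive_ext_loc _ (fun u => sin (Thx u))).
  - apply is_derive_unique. apply (ID_comp sin Thx t). apply Thx_der; auto.
    apply ID_R, derivable_pt_lim_sin.
  - apply (filter_imp Ik); [|apply open_Ik; auto]. intros; apply Dery; auto.
Qed.

Lemma curv_sol t : Ik t -> curvature (sol_x x0 L) (sol_y x0 L) t = Dth t.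
Proof.
  intros H. unfold curvature. rewrite Derx, Dery, DDerx, DDery by auto.
  pose proof (sin2_cos2' (Thx t)).
  replace (cos (Thx t) ^ 2 + sin (Thx t) ^ 2) with 1 by (simpl; lra).
  rewrite sqrt_1. simpl.
  transitivity (Dth t * (sin (Thx t) * sin (Thx t) + cos (Thx t) * cos (Thx t))); [field|rewrite H0; ring].
Qed.

Lemma invcurv t : Ik t -> / (curvature (sol_x x0 L) (sol_y x0 L) t) ^ 2 = (k * k - (t - L) ^ 2) / (w * w).
Proof.
  intros H. rewrite curv_sol by auto. unfold Dth.
  pose proof (Ik_z t H) as Hz. pose proof (sqrt_1mz_pos _ Hz) as Hq.
  assert (Hq2 : sqrt (1 - (t - L) / k * ((t - L) / k)) * sqrt (1 - (t - L) / k * ((t - L) / k)) = 1 - (t - L) / k * ((t - L) / k))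
    by (apply sqrt_sqrt; nra).
  set (q := sqrt (1 - (t - L) / k * ((t - L) / k))) in *.
  pose proof w_gt2. pose proof k_pos.
  replace ((w * (/ k * / q)) ^ 2) with ((w * w) / (k * k * (q * q))) by (field; lra).
  rewrite Hq2. field. unfold Ik in H. repeat split; try lra. nra.
Qed.

Lemma ode_sol s : Ik s -> Derive_n (fun t => / (curvature (sol_x x0 L) (sol_y x0 L) t) ^ 2) 2 s = - 2 / (w * w).
Proof.
  intros H. rewrite (Derive_n_ext_loc _ (fun t => (k * k - (t - L) ^ 2) / (w * w))).
  - simpl. pose proof w_gt2.
    rewrite (Derive_ext (Derive (fun t => (k * k - (t - L) ^ 2) / (w * w))) (fun t => - 2 * (t - L) / (w * w))).
    + apply is_derive_unique. auto_derive; [exact I|field; lra].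
    + intros t. apply is_derive_unique. auto_derive; [exact I|field; lra].
  - apply (filter_imp Ik); [|apply open_Ik; auto]. intros; apply invcurv; auto.
Qed.
Lemma Ik_in t : 0 <= t <= 2 * L -> Ik t.
Proof. intros; unfold Ik; pose proof k_pos; lra. Qed.

Lemma k_ne : k <> 0.
Proof. pose proof k_pos; lra. Qed.

Lemma aa_0 : aa k L 0 = - sg.
Proof.
  unfold aa. replace ((0 - L) / k) with (- sin sg).
  - rewrite asin_opp, asin_sin; auto. pose proof sg_bound; lra.
  - rewrite <- ksg. field. apply k_ne.
Qed.
Lemma aa_L : aa k L L = 0.
Proof. unfold aa. replace ((L - L) / k) with 0 by (field; apply k_ne). apply asin_0. Qed.

Lemma sym_sol s : sol_x x0 L (2 * L - s) = - sol_x x0 L s /\ sol_y x0 L (2 * L - s) = sol_y x0 L s.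
Proof.
  unfold sol_x, sol_y, a_. cbv zeta. fold k.
  replace ((2 * L - s - L) / k) with (- ((s - L) / k)) by (field; apply k_ne).
  rewrite asin_opp. set (a := asin ((s - L) / k)).
  set (c1 := (PI + sigma_ x0 L) / sigma_ x0 L). set (c2 := (PI - sigma_ x0 L) / sigma_ x0 L).
  replace (c1 * - a) with (- (c1 * a)) by ring. replace (c2 * - a) with (- (c2 * a)) by ring.
  rewrite !sin_neg, !cos_neg. split; ring.
Qed.

Lemma solx_0 : sol_x x0 L 0 = x0.
Proof.
  rewrite (proj1 (sol_eq 0)). unfold Gx. rewrite aa_0. pose proof wsg. pose proof w_gt2.
  replace ((w + 1) * - sg + PI) with (- sg) by lra.
  replace ((w - 1) * - sg + PI) with sg by lra.
  rewrite sin_neg. pose proof ksg. pose proof w2m1.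
  replace (k / 2 * (- sin sg / (w + 1) + sin sg / (w - 1))) with (k * sin sg / ((w + 1) * (w - 1))) by (field; lra).
  rewrite H1, <- H2. field. lra.
Qed.

Lemma soly_0 : sol_y x0 L 0 = 0.
Proof.
  rewrite (proj2 (sol_eq 0)). unfold Gy. rewrite aa_0. pose proof wsg. pose proof w_gt2.
  replace ((w + 1) * - sg + PI) with (- sg) by lra.
  replace ((w - 1) * - sg + PI) with sg by lra.
  rewrite cos_neg. pose proof ksg. pose proof w2m1. pose proof sin_sg. pose proof sg_bound.
  assert (Hc : 0 < cos sg) by (apply cos_gt_0; lra).
  unfold tan. replace PI with (w * sg) by lra.
  replace x0 with (k * sin sg / (w * w - 1)) by (rewrite H1, <- H2; field; nra).
  field. repeat split; try lra. nra.
Qed.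

Lemma solx_L : sol_x x0 L L = 0.
Proof.
  rewrite (proj1 (sol_eq L)). unfold Gx. rewrite aa_L.
  rewrite !Rmult_0_r, !Rplus_0_l, sin_PI. unfold Rdiv; ring.
Qed.

Lemma solx_2L : sol_x x0 L (2 * L) = - x0.
Proof. replace (2 * L) with (2 * L - 0) by ring. rewrite (proj1 (sym_sol 0)), solx_0; auto. Qed.
Lemma soly_2L : sol_y x0 L (2 * L) = 0.
Proof. replace (2 * L) with (2 * L - 0) by ring. rewrite (proj2 (sym_sol 0)), soly_0; auto. Qed.

Lemma dy_0 : Derive (sol_y x0 L) 0 = 0.
Proof.
  rewrite Dery by (apply Ik_in; lra). unfold Thx. rewrite aa_0. pose proof wsg.
  replace (w * - sg + PI) with 0 by lra. apply sin_0.
Qed.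
Lemma dy_2L : Derive (sol_y x0 L) (2 * L) = 0.
Proof.
  rewrite Dery by (apply Ik_in; lra). unfold Thx.
  assert (aa k L (2 * L) = sg).
  { unfold aa. replace ((2 * L - L) / k) with (- ((0 - L) / k)) by (field; apply k_ne).
    rewrite asin_opp. fold (aa k L 0). rewrite aa_0; ring. }
  rewrite H. pose proof wsg. replace (w * sg + PI) with (2 * PI) by lra. apply sin_2PI.
Qed.

Lemma aa_incr s t : 0 <= s -> s < t -> t <= 2 * L -> aa k L s < aa k L t.
Proof.
  intros. apply (incr_closed (aa k L) (fun u => / k * / sqrt (1 - (u - L)/k * ((u - L)/k))) 0 (2 * L)); auto.
  - intros u Hu. apply is_derive_aa. pose proof k_pos; lra. apply Ik_z, Ik_in; lra.
  - intros u Hu. pose proof (sqrt_1mz_pos _ (Ik_z u (Ik_in u ltac:(lra)))). pose proof k_pos.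
    apply Rmult_lt_0_compat; apply Rinv_0_lt_compat; lra.
  - intros u Hu. apply (ID_cont _ _ _ (is_derive_aa k L u ltac:(pose proof k_pos; lra) (Ik_z u (Ik_in u Hu)))).
Qed.

Lemma Csolx t : 0 <= t <= 2 * L -> continuity_pt (sol_x x0 L) t.
Proof. intros; apply (ID_cont _ _ _ (Dsolx t (Ik_in t H))). Qed.
Lemma Csoly t : 0 <= t <= 2 * L -> continuity_pt (sol_y x0 L) t.
Proof. intros; apply (ID_cont _ _ _ (Dsoly t (Ik_in t H))). Qed.

Lemma soly_incr s t : 0 <= s -> s < t -> t <= L -> sol_y x0 L s < sol_y x0 L t.
Proof.
  intros. apply (incr_closed (sol_y x0 L) (fun u => sin (Thx u)) 0 L); auto.
  - intros u Hu. apply Dsoly, Ik_in; lra.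
  - intros u Hu. unfold Thx. pose proof (aa_incr 0 u ltac:(lra) ltac:(lra) ltac:(lra)).
    pose proof (aa_incr u L ltac:(lra) ltac:(lra) ltac:(lra)). rewrite aa_0 in H2. rewrite aa_L in H3.
    pose proof wsg. pose proof w_gt2. apply sin_gt_0; nra.
  - intros u Hu; apply Csoly; lra.
Qed.

Lemma soly_pos s : 0 < s < 2 * L -> 0 < sol_y x0 L s.
Proof.
  intros Hs. destruct (Rle_dec s L).
  - rewrite <- soly_0. apply soly_incr; lra.
  - rewrite <- (proj2 (sym_sol s)). rewrite <- soly_0. apply soly_incr; lra.
Qed.

Lemma solx_pos s : 0 <= s < L -> 0 < sol_x x0 L s.
Proof.
  intros Hs. pose proof wsg. pose proof w_gt2. pose proof sg_bound. pose proof PI_RGT_0.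
  destruct (Rle_lt_dec (- (PI / 2)) (w * aa k L s)) as [Hge|Hlt].
  - assert (- sol_x x0 L s < - sol_x x0 L L); [|rewrite solx_L in H3; lra].
    apply (incr_closed (fun u => - sol_x x0 L u) (fun u => - cos (Thx u)) s L); try lra.
    + intros u Hu. apply (ID_ext (fun u => -1 * sol_x x0 L u) _ u (0 * sol_x x0 L u + -1 * cos (Thx u))).
      intros; ring. ring. apply ID_mult; [apply ID_const|apply Dsolx, Ik_in; lra].
    + intros u Hu. unfold Thx. rewrite neg_cos.
      pose proof (aa_incr s u ltac:(lra) ltac:(lra) ltac:(lra)).
      pose proof (aa_incr u L ltac:(lra) ltac:(lra) ltac:(lra)). rewrite aa_L in H4.
      rewrite Ropp_involutive. apply cos_gt_0; nra.
    + intros u Hu. apply (continuity_pt_opp (sol_x x0 L)). apply Csolx; lra.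
  - destruct (Req_dec s 0) as [E|E].
    { subst. rewrite solx_0; lra. }
    pose proof hx0 as Hx. rewrite <- solx_0 in Hx. assert (sol_x x0 L 0 < sol_x x0 L s); [|lra].
    apply (incr_closed (sol_x x0 L) (fun u => cos (Thx u)) 0 s); try lra.
    + intros u Hu. apply Dsolx, Ik_in; lra.
    + intros u Hu. unfold Thx. rewrite neg_cos.
      pose proof (aa_incr 0 u ltac:(lra) ltac:(lra) ltac:(lra)).
      pose proof (aa_incr u s ltac:(lra) ltac:(lra) ltac:(lra)). rewrite aa_0 in H3.
      assert (0 < cos (w * aa k L u + PI)) by (apply cos_gt_0; nra).
      rewrite neg_cos in H5. lra.
    + intros u Hu. apply Csolx; lra.
Qed.
Lemma soly_half s t : 0 <= s <= L -> 0 <= t <= L -> sol_y x0 L s = sol_y x0 L t -> s = t.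
Proof.
  intros Hs Ht E. destruct (Rtotal_order s t) as [H|[H|H]]; auto; exfalso.
  - pose proof (soly_incr s t ltac:(lra) H ltac:(lra)); lra.
  - pose proof (soly_incr t s ltac:(lra) H ltac:(lra)); lra.
Qed.

Lemma sol_inj s t : 0 <= s <= 2 * L -> 0 <= t <= 2 * L ->
  sol_x x0 L s = sol_x x0 L t -> sol_y x0 L s = sol_y x0 L t -> s = t.
Proof.
  intros Hs Ht Ex Ey.
  assert (Cross : forall s t, 0 <= s <= L -> L < t <= 2 * L ->
            sol_x x0 L s = sol_x x0 L t -> sol_y x0 L s = sol_y x0 L t -> False).
  { clear s t Hs Ht Ex Ey. intros s t Hs Ht Ex Ey.
    destruct (sym_sol t) as [Sx Sy].
    assert (E : s = 2 * L - t) by (apply soly_half; lra).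
    replace (2 * L - t) with s in Sx by lra. rewrite Sx in Ex.
    assert (X0 : sol_x x0 L s = 0) by lra.
    destruct (Req_dec s L) as [->|Hne]; [lra|].
    pose proof (solx_pos s ltac:(lra)). lra. }
  destruct (Rle_dec s L), (Rle_dec t L).
  - apply soly_half; auto; lra.
  - exfalso; apply (Cross s t); auto; lra.
  - exfalso; apply (Cross t s); auto; lra.
  - destruct (sym_sol s) as [Sx1 Sy1]. destruct (sym_sol t) as [Sx2 Sy2].
    assert (2 * L - s = 2 * L - t); [|lra].
    apply soly_half; lra.
Qed.

Lemma exist_sol : is_solution x0 L (2 * L / (L + x0)) (sol_x x0 L) (sol_y x0 L).
Proof.
  pose proof k_pos as Hk. pose proof w_gt2. pose proof w2m1 as W.
  assert (Hsm : forall f, (forall n, Cn Ik n f) -> smooth_near 0 (2 * L) f).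
  { intros f Hf. exists (k - L). split; [lra|]. intros n t Ht. apply (Hf n n t); auto. unfold Ik; lra. }
  split; [apply Rdiv_lt_0_compat; lra|].
  split; [|split; [|split; [|split; [|split]]]].
  - split; [apply Hsm, solx_Cn|]. split; [apply Hsm, soly_Cn|].
    split; [|split; [|split; [|split; [|split; [|split; [|split]]]]]].
    + intros s Hs E. rewrite Derx, Dery in E by (apply Ik_in; auto). injection E; intros E1 E2.
      pose proof (sin2_cos2' (Thx s)). rewrite E1, E2 in H0. lra.
    + intros s Hs. rewrite curv_sol by (apply Ik_in; auto). apply Dth_pos, Ik_in; auto.
    + apply sol_inj.
    + apply solx_0.
    + apply soly_0.
    + apply solx_2L.
    + apply soly_2L.
    + apply soly_pos.
  - intros s Hs. exists (2 * L - s). split; [lra|]. apply sym_sol.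
  - intros s Hs. rewrite Derx, Dery by (apply Ik_in; auto). pose proof (sin2_cos2' (Thx s)). simpl. lra.
  - apply dy_0.
  - apply dy_2L.
  - intros s Hs. rewrite ode_sol by (apply Ik_in; auto).
    replace (2 * L / (L + x0)) with (2 - 2 * x0 / (L + x0)) by (field; lra).
    replace (L + x0) with (x0 * (w * w)) by lra. field. split; nra.
Qed.
End Exist.

Theorem mainTheorem6 (x0 L : R) (hx0 : 0 < x0) (hL : 0 < L) :
  ((exists (lam : R) (x y : R -> R),
      is_solution x0 L lam x y /\
      forall (lam' : R) (x' y' : R -> R), is_solution x0 L lam' x' y' ->
        lam' = lam /\
        forall s, 0 <= s <= 2 * L -> x' s = x s /\ y' s = y s)
   <-> 3 * x0 < L) /\
  (3 * x0 < L ->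
     forall (lam : R) (x y : R -> R), is_solution x0 L lam x y ->
       lam = 2 * L / (L + x0) /\
       forall s, 0 <= s <= 2 * L -> x s = sol_x x0 L s /\ y s = sol_y x0 L s).
Proof.
  split; [split|].
  - intros [lam [x [y [Hs _]]]]. exact (proj1 (uniq_from_sol x0 L lam x y hx0 hL Hs)).
  - intros H3. exists (2 * L / (L + x0)), (sol_x x0 L), (sol_y x0 L).
    split; [apply exist_sol; auto|].
    intros lam' x' y' Hs'. destruct (uniq_from_sol x0 L lam' x' y' hx0 hL Hs') as [_ [Hl Hxy]].
    split; auto.
  - intros H3 lam x y Hs. destruct (uniq_from_sol x0 L lam x y hx0 hL Hs) as [_ [Hl Hxy]]. auto.
Qed.
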